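(* Let $\lambda\in[1,\infty)$ and $\epsilon>0$. Then for all $u_0\in H^\epsilon(\mathbb{T}_\lambda)$, $$\|e^{it\partial_x^2}u_0\|_{L^6_{tx}(\mathbb{T}_{\lambda^2}\times\mathbb{T}_\lambda)}\lesssim_\epsilon\lambda^\epsilon\|u_0\|_{H^\epsilon(\mathbb{T}_\lambda)},$$ with implicit constant independent of $\lambda$.
   Context: $\mathbb{T}_\lambda=\mathbb{R}/2\pi\lambda\mathbb{Z}$. For $f$ on $\mathbb{T}_\lambda$, $\mathcal F^\lambda f(q)=\int_{-\pi\lambda}^{\pi\lambda}e^{-ixq}f(x)dx$, $q\in\mathbb{Z}/\lambda$, and $e^{it\partial_x^2}$ is the Fourier multiplier $e^{-itq^2}$; it is $2\pi\lambda^2$-periodic in $t$. $\|f\|^2_{H^\epsilon(\mathbb{T}_\lambda)}=\frac{1}{2\pi\lambda}\sum_{q\in\mathbb{Z}/\lambda}\langle q\rangle^{2\epsilon}|\mathcal F^\lambda f(q)|^2$. *)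

(* Defs.v *)
From Stdlib Require Import Reals ZArith.
From Coquelicot Require Import Coquelicot.
Open Scope R_scope.

(* Fourier data of u0 on T_lam = R / 2 pi lam Z is indexed by k : Z,
   frequency q = k / lam; c k := F^lam u0 (k / lam). *)
Definition freq (lam : R) (k : Z) : R := IZR k / lam.

Definition eix (th : R) : C := (cos th, sin th).

Definition phase (lam t x : R) (k : Z) : R :=
  freq lam k * x - (freq lam k) ^ 2 * t.

(* Truncation to |k| <= N of
   e^{it d_x^2} u0 (x) = 1/(2 pi lam) sum_{q in Z/lam} e^{i x q - i t q^2} F u0 (q). *)
Definition lin_sol_trunc (lam : R) (c : Z -> C) (N : nat) (t x : R) : C :=
  Cmult (RtoC (/ (2 * PI * lam)))
    (sum_n (fun n : nat =>
       let k := (Z.of_nat n - Z.of_nat N)%Z in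
       Cmult (c k) (eix (phase lam t x k))) (2 * N)%nat).

Definition japan (q : R) : R := sqrt (1 + q ^ 2).

Definition hs_term (eps lam : R) (c : Z -> C) (k : Z) : R :=
  Rpower (japan (freq lam k)) (2 * eps) * (Cmod (c k)) ^ 2.

(* sum over k in Z split into k = n >= 0 and k = -(n+1) < 0 *)
Definition hs_pos (eps lam : R) (c : Z -> C) (n : nat) : R :=
  hs_term eps lam c (Z.of_nat n).
Definition hs_neg (eps lam : R) (c : Z -> C) (n : nat) : R :=
  hs_term eps lam c (- Z.of_nat (S n))%Z.

Definition in_Hs (eps lam : R) (c : Z -> C) : Prop :=
  ex_series (hs_pos eps lam c) /\ ex_series (hs_neg eps lam c).

Definition Hs_norm (eps lam : R) (c : Z -> C) : R :=
  sqrt (/ (2 * PI * lam) *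
        (Series (hs_pos eps lam c) + Series (hs_neg eps lam c))).

(* nonnegative sixth root (Rpower 0 y = 1 in Stdlib, so guard 0) *)
Definition root6 (a : R) : R :=
  if Rle_dec a 0 then 0 else Rpower a (/ 6).

(* ||u||_{L^6_{tx}(T_{lam^2} x T_lam)} with Lebesgue (= Riemann, the
   integrand being continuous) measure on the fundamental domains
   [0, 2 pi lam^2] x [0, 2 pi lam]. *)
Definition L6_norm (lam : R) (u : R -> R -> C) : R :=
  root6 (RInt (fun t => RInt (fun x => (Cmod (u t x)) ^ 6) 0 (2 * PI * lam))
              0 (2 * PI * lam ^ 2)).

(* Main.v *)
Require Import Defs.
From Stdlib Require Import Reals ZArith Znumtheory List Lia Lra Classical.
From Coquelicot Require Import Coquelicot.

Module M_NT1.
Import ListNotations.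
Local Open Scope Z_scope.

Lemma NoDup_list_prod {A B} (l : list A) (l' : list B) :
  NoDup l -> NoDup l' -> NoDup (list_prod l l').
Proof.
  induction 1 as [|a l Ha Hl IH]; intros Hl'; simpl; [constructor|].
  apply NoDup_app; auto.
  - apply (NoDup_map_NoDup_ForallPairs); [|exact Hl'].
    intros x y _ _ H; now inversion H.
  - intros [x y] H1 H2. apply in_map_iff in H1. destruct H1 as [z [Hz _]].
    inversion Hz; subst. apply in_prod_iff in H2. tauto.
Qed.

Lemma inj_len {A B} (l : list A) (l' : list B) (F : A -> B) :
  NoDup l -> (forall x y, In x l -> In y l -> F x = F y -> x = y) ->
  (forall x, In x l -> In (F x) l') -> (length l <= length l')%nat.
Proof.
  intros Hn Hi Hin.
  assert (H1 : NoDup (map F l)).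
  { apply NoDup_map_NoDup_ForallPairs; [|exact Hn].
    intros x y Hx Hy; apply Hi; auto. }
  assert (H2 : incl (map F l) l').
  { intros y Hy; apply in_map_iff in Hy; destruct Hy as [x [<- Hx]]; auto. }
  pose proof (NoDup_incl_length H1 H2). rewrite length_map in H. exact H.
Qed.

Lemma filter_filter_len {A} (f g : A -> bool) l :
  (length (filter f (filter g l)) <= length (filter f l))%nat.
Proof.
  induction l as [|a l IH]; simpl; auto.
  destruct (g a); simpl; destruct (f a); simpl; lia.
Qed.

Lemma fiber_len {A B} (dec : forall x y : B, {x = y} + {x <> y})
  (l : list A) (l' : list B) (F : A -> B) (k : nat) :
  (forall x, In x l -> In (F x) l') ->
  (forall b, (length (filter (fun x => if dec (F x) b then true else false) l) <= k)%nat) ->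
  (length l <= k * length l')%nat.
Proof.
  revert l. induction l' as [|b l' IH]; intros l Hin Hk.
  - destruct l as [|x l]; simpl; [lia|]. exfalso; apply (Hin x); simpl; auto.
  - simpl.
    rewrite <- (filter_length (fun x => if dec (F x) b then true else false) l).
    assert (length (filter (fun x => negb (if dec (F x) b then true else false)) l)
            <= k * length l')%nat.
    { apply IH.
      - intros x Hx. apply filter_In in Hx. destruct Hx as [Hx Hb].
        destruct (dec (F x) b); simpl in Hb; try discriminate.
        destruct (Hin x Hx); auto; congruence.
      - intros b'. eapply Nat.le_trans; [apply filter_filter_len|]. apply Hk. }
    specialize (Hk b). lia.
Qed.

Definition Zr (lo : Z) (n : nat) : list Z := map (fun i => lo + Z.of_nat i) (seq 0 n).

Lemma Zr_In lo n x : In x (Zr lo n) <-> lo <= x < lo + Z.of_nat n.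
Proof.
  unfold Zr; rewrite in_map_iff; split.
  - intros [i [<- Hi]]. apply in_seq in Hi. lia.
  - intros H. exists (Z.to_nat (x - lo)). split; [lia|]. apply in_seq; lia.
Qed.

Lemma Zr_NoDup lo n : NoDup (Zr lo n).
Proof.
  unfold Zr. apply NoDup_map_NoDup_ForallPairs; [|apply seq_NoDup].
  intros x y _ _ H; lia.
Qed.

Definition divs (M : Z) : list Z :=
  filter (fun d => Z.eqb (M mod d) 0) (Zr 1 (Z.to_nat M)).
Definition dcount (M : Z) : nat := length (divs M).

Lemma divs_In M d : 1 <= M -> (In d (divs M) <-> 1 <= d /\ (d | M)).
Proof.
  intros HM; unfold divs; rewrite filter_In, Zr_In, Z.eqb_eq; split.
  - intros [H1 H2]; split; [lia|]. apply Z.mod_divide; auto; lia.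
  - intros [H1 H2]; split.
    + pose proof (Z.divide_pos_le d M ltac:(lia) H2); lia.
    + apply Z.mod_divide; auto; lia.
Qed.

Lemma divs_NoDup M : NoDup (divs M).
Proof. apply NoDup_filter, Zr_NoDup. Qed.

Lemma dcount_mono a b : 1 <= b -> (a | b) -> (dcount a <= dcount b)%nat.
Proof.
  intros Hb Hab.
  assert (Ha : 1 <= a \/ a <= -1 \/ a = 0).
  { lia. }
  destruct (Z_le_gt_dec 1 a) as [Ha1|Ha1].
  - unfold dcount; apply (inj_len _ _ (fun x => x)); auto using divs_NoDup.
    intros x Hx. rewrite divs_In in *; auto. destruct Hx; split; auto.
    eapply Z.divide_trans; eauto.
  - unfold dcount, divs. replace (Z.to_nat a) with 0%nat by lia. simpl; lia.
Qed.

End M_NT1.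
Import M_NT1.

Module M_NT2.
Import ListNotations.
Local Open Scope Z_scope.

Lemma gcd_pos_r x a : 1 <= a -> 1 <= Z.gcd x a.
Proof.
  intros Ha. pose proof (Z.gcd_nonneg x a).
  destruct (Z.eq_dec (Z.gcd x a) 0) as [E|E]; [|lia].
  apply Z.gcd_eq_0 in E; lia.
Qed.

Lemma dcount_mul a b : 1 <= a -> 1 <= b -> (dcount (a * b) <= dcount a * dcount b)%nat.
Proof.
  intros Ha Hb. unfold dcount. rewrite <- length_prod.
  apply (inj_len _ _ (fun x => (Z.gcd x a, x / Z.gcd x a))); auto using divs_NoDup.
  - intros x y Hx Hy H. inversion H as [[H1 H2]].
    pose proof (gcd_pos_r x a Ha).
    rewrite (Zdivide_Zdiv_eq (Z.gcd x a) x) by (auto using Z.gcd_divide_l; lia).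
    rewrite (Zdivide_Zdiv_eq (Z.gcd y a) y) by (auto using Z.gcd_divide_l;
       pose proof (gcd_pos_r y a Ha); lia).
    congruence.
  - intros x Hx. apply divs_In in Hx; [|nia]. destruct Hx as [Hx1 Hx2].
    pose proof (gcd_pos_r x a Ha) as Hg.
    set (g := Z.gcd x a) in *.
    apply in_prod; apply divs_In; auto.
    + split; [lia|]. apply Z.gcd_divide_r.
    + assert (Ex : x = g * (x / g)) by (apply Zdivide_Zdiv_eq; [lia|apply Z.gcd_divide_l]).
      assert (Ea : a = g * (a / g)) by (apply Zdivide_Zdiv_eq; [lia|apply Z.gcd_divide_r]).
      split.
      * assert (0 < x / g) by (apply Z.mul_pos_cancel_l with g; lia). lia.
      * assert (Hc : Z.gcd (x / g) (a / g) = 1).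
        { rewrite Z.gcd_div_factor; try lia; try apply Z.gcd_divide_l;
            try apply Z.gcd_divide_r. fold g. apply Z.div_same; lia. }
        apply Z.gauss with (a / g); auto.
        rewrite Ex, Ea in Hx2. rewrite <- Z.mul_assoc in Hx2.
        apply Z.mul_divide_cancel_l in Hx2; auto; lia.
Qed.

End M_NT2.
Import M_NT2.

Module M_NT3.
Import ListNotations.
Local Open Scope Z_scope.

Lemma atom_pow p : 2 <= p -> (forall q, 2 <= q -> (q | p) -> q = p) ->
  forall (e : nat) x, 1 <= x -> (x | p ^ Z.of_nat e) ->
  exists i, (i <= e)%nat /\ x = p ^ Z.of_nat i.
Proof.
  intros Hp Ha e. induction e as [|e IH]; intros x Hx Hd.
  - simpl in Hd. exists 0%nat; split; [lia|]. simpl.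
    apply Z.divide_pos_le in Hd; lia.
  - rewrite Nat2Z.inj_succ, Z.pow_succ_r in Hd by lia.
    pose proof (gcd_pos_r x p ltac:(lia)) as Hg.
    destruct (Z.eq_dec (Z.gcd x p) 1) as [E|E].
    + apply Z.gauss in Hd; auto.
      destruct (IH x Hx Hd) as [i [Hi ->]]. exists i; split; auto.
    + assert (Gp : Z.gcd x p = p).
      { apply Ha; [lia|apply Z.gcd_divide_r]. }
      assert (Hpx : (p | x)) by (rewrite <- Gp; apply Z.gcd_divide_l).
      destruct Hpx as [x' Ex]. subst x.
      assert (1 <= x') by nia.
      rewrite (Z.mul_comm x' p) in Hd. apply Z.mul_divide_cancel_l in Hd; [|lia].
      destruct (IH x' H Hd) as [i [Hi ->]]. exists (S i); split; [lia|].
      rewrite Nat2Z.inj_succ, Z.pow_succ_r by lia. ring.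
Qed.

Lemma dcount_atom_pow p (e : nat) : 2 <= p -> (forall q, 2 <= q -> (q | p) -> q = p) ->
  (dcount (p ^ Z.of_nat e) <= S e)%nat.
Proof.
  intros Hp Ha. unfold dcount.
  rewrite <- (length_seq (S e) 0).
  assert (Hpe : 1 <= p ^ Z.of_nat e) by
    (pose proof (Z.pow_pos_nonneg p (Z.of_nat e)); lia).
  replace (length (seq 0 (S e))) with (length (map (fun i => p ^ Z.of_nat i) (seq 0 (S e))))
    by apply length_map.
  apply (inj_len _ _ (fun x => x)); auto using divs_NoDup.
  intros x Hx. apply divs_In in Hx; auto. destruct Hx as [H1 H2].
  destruct (atom_pow p Hp Ha e x H1 H2) as [i [Hi ->]].
  apply in_map_iff; exists i; split; [reflexivity|apply in_seq; lia].
Qed.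

Lemma smallest_div M : 2 <= M -> exists p, 2 <= p /\ (p | M) /\
  forall q, 2 <= q -> (q | M) -> p <= q.
Proof.
  intros HM.
  assert (H : forall k, 0 <= k -> 2 <= k -> (k | M) -> exists p, 2 <= p /\ (p | M) /\
    forall q, 2 <= q -> (q | M) -> p <= q).
  { intros k Hk. pattern k. apply Z_lt_induction; auto.
    intros x IH Hx Hxd.
    destruct (classic (exists q, 2 <= q < x /\ (q | M))) as [[q [Hq Hqd]]|Hn].
    - apply (IH q); lia || auto.
    - exists x; repeat split; auto. intros q Hq Hqd.
      destruct (Z_lt_le_dec q x); auto. exfalso; apply Hn; exists q; split; auto; lia. }
  apply (H M); try lia. apply Z.divide_refl.
Qed.

Lemma peel M p : 1 <= M -> 2 <= p -> (p | M) ->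
  exists (e : nat) m, (1 <= e)%nat /\ 1 <= m /\ M = p ^ Z.of_nat e * m /\ ~ (p | m).
Proof.
  intros HM Hp.
  assert (G : forall M, 0 <= M -> 1 <= M -> (p | M) -> exists (e : nat) m, (1 <= e)%nat /\ 1 <= m /\
      M = p ^ Z.of_nat e * m /\ ~ (p | m)).
  { intros M0 H0. pattern M0. apply Z_lt_induction; auto.
    intros x IH Hx [x1 Ex]. subst x.
    assert (1 <= x1) by nia.
    destruct (classic (p | x1)) as [Hd|Hd].
    - destruct (IH x1 ltac:(nia) H Hd) as [e [m [He [Hm [E Hn]]]]].
      exists (S e), m; repeat split; auto; try lia.
      rewrite Nat2Z.inj_succ, Z.pow_succ_r by lia. rewrite E; ring.
    - exists 1%nat, x1; repeat split; auto. change (Z.of_nat 1) with 1; rewrite Z.pow_1_r; ring. }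
  apply G; lia.
Qed.

End M_NT3.
Import M_NT3.

Module M_NT4.
Import ListNotations.
Local Open Scope R_scope.

Lemma ln2_pos : 0 < ln 2.
Proof. rewrite <- ln_1. apply ln_increasing; lra. Qed.

Lemma fact1 d : 0 < d -> forall (e : nat) p, 2 <= p ->
  INR e + 1 <= Rmax 1 (/ (d * ln 2)) * Rpower p (INR e * d).
Proof.
  intros Hd e p Hp. pose proof ln2_pos.
  set (K := Rmax 1 (/ (d * ln 2))).
  assert (K1 : 1 <= K) by apply Rmax_l.
  assert (K2 : K * (d * ln 2) >= 1).
  { assert (/ (d * ln 2) <= K) by apply Rmax_r.
    assert (0 < d * ln 2) by nra.
    apply Rle_ge. apply (Rmult_le_reg_r (/ (d * ln 2))). apply Rinv_0_lt_compat; auto.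
    rewrite Rmult_assoc, Rinv_r by lra. lra. }
  unfold Rpower.
  assert (Hl : ln 2 <= ln p).
  { destruct (Req_dec p 2) as [->|Hne]; [lra|]. left; apply ln_increasing; lra. }
  pose proof (exp_ineq1_le (INR e * d * ln p)).
  pose proof (pos_INR e).
  assert (INR e * d * ln 2 <= INR e * d * ln p).
  { apply Rmult_le_compat_l; auto. apply Rmult_le_pos; lra. }
  assert (K * (1 + INR e * d * ln 2) <= K * exp (INR e * d * ln p)).
  { apply Rmult_le_compat_l; lra. }
  assert (INR e + 1 <= K * (1 + INR e * d * ln 2)).
  { replace (K * (1 + INR e * d * ln 2)) with (K + INR e * (K * (d * ln 2))) by ring.
    assert (INR e * 1 <= INR e * (K * (d * ln 2))).
    { apply Rmult_le_compat_l; lra. }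
    lra. }
  lra.
Qed.

Lemma fact2 d : 0 < d -> forall (e : nat) p, exp (/ d) <= p ->
  INR e + 1 <= Rpower p (INR e * d).
Proof.
  intros Hd e p Hp. unfold Rpower.
  assert (0 < p) by (pose proof (exp_pos (/d)); lra).
  assert (Hl : / d <= ln p).
  { rewrite <- (ln_exp (/ d)). destruct (Req_dec (exp (/ d)) p) as [<-|Hne]; [lra|].
    left; apply ln_increasing; auto; [apply exp_pos|lra]. }
  pose proof (exp_ineq1_le (INR e * d * ln p)).
  pose proof (pos_INR e).
  assert (HH : INR e * d * (/ d) <= INR e * d * ln p).
  { apply Rmult_le_compat_l; auto. apply Rmult_le_pos; lra. }
  rewrite Rmult_assoc, Rinv_r, Rmult_1_r in HH by lra.
  lra.
Qed.

Lemma dcount1 : dcount 1 = 1%nat.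
Proof. reflexivity. Qed.

Lemma Rpower_1_base y : Rpower 1 y = 1.
Proof. unfold Rpower; rewrite ln_1, Rmult_0_r; apply exp_0. Qed.

Lemma Rpower_IZR_pow p (e : nat) d : (0 < p)%Z ->
  Rpower (IZR (p ^ Z.of_nat e)) d = Rpower (IZR p) (INR e * d).
Proof.
  intros Hp. rewrite <- pow_IZR, <- Rpower_pow, Rpower_mult; auto.
  apply IZR_lt; auto.
Qed.

Lemma db_ind d K B : 0 < d -> 1 <= K ->
  (forall (e : nat) p, 2 <= p -> INR e + 1 <= K * Rpower p (INR e * d)) ->
  (forall (e : nat) p, IZR B <= p -> INR e + 1 <= Rpower p (INR e * d)) ->
  forall n : nat, forall M, (1 <= M <= Z.of_nat n)%Z -> forall P, (2 <= P)%Z ->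
  (forall q, (2 <= q)%Z -> (q | M)%Z -> (P <= q)%Z) ->
  INR (dcount M) <= K ^ (Z.to_nat (B - P)) * Rpower (IZR M) d.
Proof.
  intros Hd HK Hf1 Hf2 n. induction n as [|n IH]; intros M HM P HP Hq; [lia|].
  destruct (Z.eq_dec M 1) as [->|HM1].
  - rewrite dcount1, Rpower_1_base. simpl. rewrite Rmult_1_r.
    apply pow_R1_Rle; auto.
  - destruct (smallest_div M ltac:(lia)) as [p [Hp2 [HpM Hpmin]]].
    assert (HPp : (P <= p)%Z) by (apply Hq; auto).
    assert (Ha : forall q, (2 <= q)%Z -> (q | p)%Z -> q = p).
    { intros q Hq2 Hqp. assert (p <= q)%Z by (apply Hpmin; auto; eapply Z.divide_trans; eauto).
      apply Z.divide_pos_le in Hqp; lia. }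
    destruct (peel M p ltac:(lia) Hp2 HpM) as [e [m [He [Hm [EM Hnd]]]]].
    assert (Hpe : (p <= p ^ Z.of_nat e)%Z).
    { replace (Z.of_nat e) with (1 + Z.of_nat (e - 1))%Z by lia.
      rewrite Z.pow_add_r, Z.pow_1_r by lia.
      pose proof (Z.pow_pos_nonneg p (Z.of_nat (e - 1))); nia. }
    assert (H2m : (2 * m <= M)%Z).
    { rewrite EM. set (X := (p ^ Z.of_nat e)%Z) in *. clear -Hpe Hp2 Hm. nia. }
    assert (Hmlt : (m <= Z.of_nat n)%Z) by lia.
    assert (Hqm : forall q, (2 <= q)%Z -> (q | m)%Z -> (p + 1 <= q)%Z).
    { intros q Hq2 Hqm. assert (p <= q)%Z.
      { apply Hpmin; auto. rewrite EM. apply Z.divide_mul_r; auto. }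
      destruct (Z.eq_dec p q) as [<-|]; [contradiction|lia]. }
    specialize (IH m ltac:(lia) (p + 1)%Z ltac:(lia) Hqm).
    assert (Hdc : (dcount M <= S e * dcount m)%nat).
    { rewrite EM. eapply Nat.le_trans; [apply dcount_mul; try lia|].
      apply Nat.mul_le_mono_r. apply dcount_atom_pow; auto. }
    apply le_INR in Hdc. rewrite mult_INR, S_INR in Hdc. rewrite EM in Hdc.
    rewrite EM, mult_IZR, <- Rpower_mult_distr, Rpower_IZR_pow; try lia.
    2: { apply IZR_lt. lia. }
    2: { apply IZR_lt; lia. }
    set (Rp := Rpower (IZR p) (INR e * d)) in *.
    set (Rm := Rpower (IZR m) d) in *.
    assert (0 <= INR (dcount m)) by apply pos_INR.
    assert (0 < Rm) by (unfold Rm, Rpower; apply exp_pos).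
    assert (0 < Rp) by (unfold Rp, Rpower; apply exp_pos).
    assert (0 <= INR e) by apply pos_INR.
    destruct (Z_lt_le_dec p B) as [HpB|HpB].
    + assert (F1 := Hf1 e (IZR p) ltac:(apply IZR_le in Hp2; lra)). fold Rp in F1.
      assert (Hexp : (S (Z.to_nat (B - (p + 1))) <= Z.to_nat (B - P))%nat) by lia.
      apply (Rle_pow K) in Hexp; auto. simpl in Hexp.
      assert (0 <= K ^ Z.to_nat (B - (p + 1))) by (apply pow_le; lra).
      apply Rle_trans with ((INR e + 1) * (K ^ Z.to_nat (B - (p + 1)) * Rm)).
      { eapply Rle_trans; [exact Hdc|]. apply Rmult_le_compat_l; lra. }
      apply Rle_trans with ((K * Rp) * (K ^ Z.to_nat (B - (p + 1)) * Rm)).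
      { apply Rmult_le_compat_r; auto. apply Rmult_le_pos; lra. }
      replace (K * Rp * (K ^ Z.to_nat (B - (p + 1)) * Rm)) with
        ((K * K ^ Z.to_nat (B - (p + 1))) * (Rp * Rm)) by ring.
      apply Rmult_le_compat_r; [apply Rmult_le_pos; lra|]. lra.
    + assert (F2 := Hf2 e (IZR p) ltac:(apply IZR_le in HpB; lra)). fold Rp in F2.
      assert (Hexp : (Z.to_nat (B - (p + 1)) <= Z.to_nat (B - P))%nat) by lia.
      apply (Rle_pow K) in Hexp; auto.
      assert (0 <= K ^ Z.to_nat (B - (p + 1))) by (apply pow_le; lra).
      apply Rle_trans with ((INR e + 1) * (K ^ Z.to_nat (B - (p + 1)) * Rm)).
      { eapply Rle_trans; [exact Hdc|]. apply Rmult_le_compat_l; lra. }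
      apply Rle_trans with (Rp * (K ^ Z.to_nat (B - (p + 1)) * Rm)).
      { apply Rmult_le_compat_r; auto. apply Rmult_le_pos; lra. }
      replace (Rp * (K ^ Z.to_nat (B - (p + 1)) * Rm)) with
        (K ^ Z.to_nat (B - (p + 1)) * (Rp * Rm)) by ring.
      apply Rmult_le_compat_r; [apply Rmult_le_pos; lra|]. lra.
Qed.

Theorem divisor_bound d : 0 < d -> exists C, 0 < C /\
  forall M, (1 <= M)%Z -> INR (dcount M) <= C * Rpower (IZR M) d.
Proof.
  intros Hd.
  set (K := Rmax 1 (/ (d * ln 2))).
  set (B := up (exp (/ d))).
  assert (K1 : 1 <= K) by apply Rmax_l.
  exists (K ^ Z.to_nat (B - 2)). split; [apply pow_lt; lra|].
  intros M HM.
  apply (db_ind d K B Hd K1 (fact1 d Hd)) with (n := Z.to_nat M); try lia.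
  intros e p Hp. apply fact2; auto. pose proof (archimed (exp (/ d))). fold B in H. lra.
Qed.

End M_NT4.
Import M_NT4.

Module M_NT5.
Import ListNotations.
Local Open Scope Z_scope.

Lemma gcd_prod n x y : 1 <= n -> (n | x * y) -> (n | Z.gcd x n * Z.gcd y n).
Proof.
  intros Hn Hd.
  pose proof (gcd_pos_r x n Hn) as Hg. set (g := Z.gcd x n) in *.
  assert (Ex : x = g * (x / g)) by (apply Zdivide_Zdiv_eq; [lia|apply Z.gcd_divide_l]).
  assert (En : n = g * (n / g)) by (apply Zdivide_Zdiv_eq; [lia|apply Z.gcd_divide_r]).
  assert (Hc : Z.gcd (x / g) (n / g) = 1).
  { rewrite Z.gcd_div_factor; try lia; try apply Z.gcd_divide_l;
      try apply Z.gcd_divide_r. fold g. apply Z.div_same; lia. }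
  assert (H1 : (n / g | y)).
  { apply Z.gauss with (x / g). 2: now rewrite Z.gcd_comm.
    rewrite Ex, En in Hd. rewrite <- Z.mul_assoc in Hd.
    apply Z.mul_divide_cancel_l in Hd; auto; lia. }
  assert (H2 : (n / g | Z.gcd y n)).
  { apply Z.gcd_greatest; auto. exists g; lia. }
  rewrite En at 1. apply Z.mul_divide_mono_l. auto.
Qed.

Lemma prim_cop a b M : Z.gcd a b = 1 -> 3 * a ^ 2 + b ^ 2 = M -> Z.gcd a M = 1.
Proof.
  intros Hab HM.
  set (q := Z.gcd a M).
  assert (Hq0 : 0 <= q) by apply Z.gcd_nonneg.
  assert (Hqa : (q | a)) by apply Z.gcd_divide_l.
  assert (HqM : (q | M)) by apply Z.gcd_divide_r.
  assert (Hqb2 : (q | b * b)).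
  { replace (b * b) with (M - 3 * a * a) by (rewrite <- HM; ring).
    apply Z.divide_sub_r; auto. apply Z.divide_mul_r; auto. }
  assert (Hqb1 : Z.gcd q b = 1).
  { apply Z.gcd_unique; try lia; try apply Z.divide_1_l.
    intros r Hr1 Hr2. rewrite <- Hab. apply Z.gcd_greatest; [|exact Hr2].
    eapply Z.divide_trans; [exact Hr1|exact Hqa]. }
  assert (Hqb : (q | b)) by (apply Z.gauss with b; auto).
  assert (Hq1 : (q | 1)) by (rewrite <- Hab; apply Z.gcd_greatest; auto).
  apply Z.divide_1_r_abs in Hq1. lia.
Qed.

Lemma gcd_div_cop g a n : 1 <= g -> (g | n) -> Z.gcd a n = 1 -> Z.gcd g a = 1.
Proof.
  intros Hg Hgn H. apply Z.gcd_unique; try lia; try apply Z.divide_1_l.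
  intros r H1 H2. rewrite <- H. apply Z.gcd_greatest; [exact H2|].
  eapply Z.divide_trans; [exact H1|exact Hgn].
Qed.

Lemma prim_key M a0 b0 a1 b1 a b : 1 <= M ->
  Z.gcd a0 b0 = 1 -> 3 * a0 ^ 2 + b0 ^ 2 = M ->
  Z.gcd a1 b1 = 1 -> 3 * a1 ^ 2 + b1 ^ 2 = M ->
  Z.gcd a b = 1 -> 3 * a ^ 2 + b ^ 2 = M ->
  Z.gcd (b * a0 - a * b0) M = Z.gcd (b1 * a0 - a1 * b0) M ->
  Z.gcd (b * a0 + a * b0) M = Z.gcd (b1 * a0 + a1 * b0) M ->
  (M | 6 * (b * a1 - b1 * a)).
Proof.
  intros HM P0 E0 P1 E1 P E Hu Hv.
  set (u1 := b1 * a0 - a1 * b0) in *. set (v1 := b1 * a0 + a1 * b0) in *.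
  set (D := b * a1 - b1 * a).
  set (g1 := Z.gcd u1 M). set (g2 := Z.gcd v1 M).
  assert (Hg1 : 1 <= g1) by apply gcd_pos_r, HM.
  assert (Hg2 : 1 <= g2) by apply gcd_pos_r, HM.
  assert (C0 : Z.gcd a0 M = 1) by (eapply prim_cop; eauto).
  assert (C1 : Z.gcd a1 M = 1) by (eapply prim_cop; eauto).
  assert (Huv : (M | u1 * v1)).
  { exists (a0 ^ 2 - a1 ^ 2).
    assert (HH : u1 * v1 = a0 ^ 2 * (3 * a1 ^ 2 + b1 ^ 2) - a1 ^ 2 * (3 * a0 ^ 2 + b0 ^ 2))
      by (unfold u1, v1; ring).
    rewrite HH, E0, E1. ring. }
  assert (HMg : (M | g1 * g2)) by (apply gcd_prod; auto).
  assert (Hg1D : (g1 | D)).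
  { apply Z.gauss with a0.
    2: { apply (gcd_div_cop g1 a0 M); auto. apply Z.gcd_divide_r. }
    replace (a0 * D) with ((b * a0 - a * b0) * a1 - u1 * a) by (unfold D, u1; ring).
    apply Z.divide_sub_r; apply Z.divide_mul_l.
    - unfold g1. rewrite <- Hu. apply Z.gcd_divide_l.
    - apply Z.gcd_divide_l. }
  assert (Hg2D : (g2 | D)).
  { apply Z.gauss with a0.
    2: { apply (gcd_div_cop g2 a0 M); auto. apply Z.gcd_divide_r. }
    replace (a0 * D) with ((b * a0 + a * b0) * a1 - v1 * a) by (unfold D, v1; ring).
    apply Z.divide_sub_r; apply Z.divide_mul_l.
    - unfold g2. rewrite <- Hv. apply Z.gcd_divide_l.
    - apply Z.gcd_divide_l. }
  set (h := Z.gcd g1 g2).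
  assert (Hh : 1 <= h) by (apply gcd_pos_r; auto).
  assert (HhM : (h | M)).
  { eapply Z.divide_trans; [apply Z.gcd_divide_l|apply Z.gcd_divide_r]. }
  assert (Hh2b : (h | 2 * b1)).
  { apply Z.gauss with a0.
    2: { apply (gcd_div_cop h a0 M); auto. }
    replace (a0 * (2 * b1)) with (u1 + v1) by (unfold u1, v1; ring).
    apply Z.divide_add_r.
    - eapply Z.divide_trans; [apply Z.gcd_divide_l|apply Z.gcd_divide_l].
    - eapply Z.divide_trans; [apply Z.gcd_divide_r|apply Z.gcd_divide_l]. }
  assert (Hq3 : (Z.gcd b1 M | 3)).
  { set (q := Z.gcd b1 M).
    assert (Hq : 1 <= q) by (apply gcd_pos_r; auto).
    assert (Hqa : Z.gcd q a1 = 1).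
    { apply (gcd_div_cop q a1 M); auto. apply Z.gcd_divide_r. }
    assert (H3 : (q | a1 * (a1 * 3))).
    { replace (a1 * (a1 * 3)) with (M - b1 * b1) by (rewrite <- E1; ring).
      apply Z.divide_sub_r. apply Z.gcd_divide_r. apply Z.divide_mul_l, Z.gcd_divide_l. }
    apply Z.gauss in H3; auto. apply Z.gauss in H3; auto. }
  assert (Hh6 : (h | 6)).
  { assert (Ha : (h | Z.gcd (2 * b1) (2 * M))).
    { apply Z.gcd_greatest; auto. apply Z.divide_mul_r; auto. }
    rewrite Z.gcd_mul_mono_l in Ha. change (Z.abs 2) with 2 in Ha.
    eapply Z.divide_trans; [exact Ha|]. replace 6 with (2 * 3) by ring.
    apply Z.mul_divide_mono_l; auto. }
  assert (Ex : g1 = h * (g1 / h)) by (apply Zdivide_Zdiv_eq; [lia|apply Z.gcd_divide_l]).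
  assert (Ey : g2 = h * (g2 / h)) by (apply Zdivide_Zdiv_eq; [lia|apply Z.gcd_divide_r]).
  assert (Cxy : Z.gcd (g1 / h) (g2 / h) = 1).
  { rewrite Z.gcd_div_factor; try lia; try apply Z.gcd_divide_l;
      try apply Z.gcd_divide_r. fold h. apply Z.div_same; lia. }
  set (x := g1 / h) in *. set (y := g2 / h) in *.
  destruct Hg1D as [k Ek].
  assert (Hyk : (y | k)).
  { apply Z.gauss with x; auto. 2: now rewrite Z.gcd_comm.
    apply Z.mul_divide_cancel_l with h; [lia|].
    replace (h * (x * k)) with D by (rewrite Ek, Ex; ring).
    rewrite <- Ey; auto. }
  destruct Hyk as [k' Ek']. destruct Hh6 as [t Et].
  eapply Z.divide_trans; [exact HMg|].
  exists (t * k'). rewrite Ek, Ek', Ex, Ey.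
  replace 6 with (t * h) by lia. ring.
Qed.

End M_NT5.
Import M_NT5.

Module M_NT6.
Import ListNotations.
Local Open Scope Z_scope.

Definition sbox M := Zr (- M) (Z.to_nat (2 * M + 1)).
Definition sols M : list (Z * Z) :=
  filter (fun s : Z * Z => Z.eqb (3 * fst s ^ 2 + snd s ^ 2) M) (list_prod (sbox M) (sbox M)).

Lemma sols_In M a b : 0 <= M -> (In (a, b) (sols M) <-> 3 * a ^ 2 + b ^ 2 = M).
Proof.
  intros HM. unfold sols, sbox. rewrite filter_In, in_prod_iff, !Zr_In, Z.eqb_eq. cbn [fst snd].
  split; [tauto|]. intros H. rewrite !Z.pow_2_r in H.
  assert (a * a <= M) by nia. assert (b * b <= M) by nia.
  assert (- M <= a <= M) by nia. assert (- M <= b <= M) by nia.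
  repeat split; auto; lia.
Qed.

Lemma sols_NoDup M : NoDup (sols M).
Proof. apply NoDup_filter, NoDup_list_prod; apply Zr_NoDup. Qed.

Lemma fiber_nonempty {A} (f : A -> bool) l k :
  (forall x, In x l -> f x = true -> (length (filter f l) <= k)%nat) ->
  (length (filter f l) <= k)%nat.
Proof.
  intros H. destruct (filter f l) as [|x r] eqn:E; [simpl; lia|].
  assert (Hx : In x (filter f l)) by (rewrite E; left; auto).
  apply filter_In in Hx. apply (H x); tauto.
Qed.

Definition zz_dec : forall x y : Z * Z, {x = y} + {x <> y}.
Proof. decide equality; apply Z.eq_dec. Defined.

Lemma recover M a1 b1 a b a' b' : 1 <= M ->
  3 * a1 ^ 2 + b1 ^ 2 = M -> 3 * a ^ 2 + b ^ 2 = M -> 3 * a' ^ 2 + b' ^ 2 = M ->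
  b * a1 - b1 * a = b' * a1 - b1 * a' ->
  b * b1 + 3 * a * a1 = b' * b1 + 3 * a' * a1 -> a = a' /\ b = b'.
Proof.
  intros HM E1 E E' HD HY.
  assert (Ha : M * a = M * a').
  { rewrite <- E1.
    replace ((3 * a1 ^ 2 + b1 ^ 2) * a) with (a1 * (b * b1 + 3 * a * a1) - b1 * (b * a1 - b1 * a)) by ring.
    rewrite HD, HY. ring. }
  assert (Hb : M * b = M * b').
  { rewrite <- E1.
    replace ((3 * a1 ^ 2 + b1 ^ 2) * b) with (b1 * (b * b1 + 3 * a * a1) + 3 * a1 * (b * a1 - b1 * a)) by ring.
    rewrite HD, HY. ring. }
  split; eapply Z.mul_cancel_l; eauto; lia.
Qed.

Lemma ident a1 b1 a b :
  3 * (b * a1 - b1 * a) ^ 2 + (b * b1 + 3 * a * a1) ^ 2 =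
  (3 * a ^ 2 + b ^ 2) * (3 * a1 ^ 2 + b1 ^ 2).
Proof. ring. Qed.

Lemma prim_of g a b : 1 <= g -> Z.gcd a b = g ->
  a = g * (a / g) /\ b = g * (b / g) /\ Z.gcd (a / g) (b / g) = 1.
Proof.
  intros Hg Hab.
  split; [apply Zdivide_Zdiv_eq; [lia| rewrite <- Hab; apply Z.gcd_divide_l]|].
  split; [apply Zdivide_Zdiv_eq; [lia| rewrite <- Hab; apply Z.gcd_divide_r]|].
  rewrite Z.gcd_div_factor; try lia; rewrite ?Hab; try apply Z.div_same; try lia;
    rewrite <- Hab; [apply Z.gcd_divide_l|apply Z.gcd_divide_r].
Qed.

End M_NT6.
Import M_NT6.

Module M_NT7.
Import ListNotations.
Local Open Scope Z_scope.

Definition pa g (s : Z * Z) := fst s / g.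
Definition pb g (s : Z * Z) := snd s / g.
Definition F2 g Mp a0 b0 (s : Z * Z) : Z * Z :=
  (Z.gcd (pb g s * a0 - pa g s * b0) Mp, Z.gcd (pb g s * a0 + pa g s * b0) Mp).
Definition F3 g Mp a1 b1 (s : Z * Z) : Z * bool :=
  (6 * (pb g s * a1 - b1 * pa g s) / Mp, Z.leb 0 (pb g s * b1 + 3 * pa g s * a1)).
Definition L1 M g := filter (fun s : Z * Z => if Z.eq_dec (Z.gcd (fst s) (snd s)) g then true else false) (sols M).
Definition L2 M g Mp a0 b0 q :=
  filter (fun s => if zz_dec (F2 g Mp a0 b0 s) q then true else false) (L1 M g).

Lemma L1_facts M g s : 1 <= M -> In s (L1 M g) ->
  1 <= g /\ M = g * g * (M / (g * g)) /\ 1 <= M / (g * g) /\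
  3 * pa g s ^ 2 + pb g s ^ 2 = M / (g * g) /\ Z.gcd (pa g s) (pb g s) = 1 /\
  s = (g * pa g s, g * pb g s).
Proof.
  intros HM Hs. unfold L1 in Hs. apply filter_In in Hs. destruct Hs as [Hs Hg].
  destruct s as [a b]. apply sols_In in Hs; [|lia]. cbn [fst snd] in Hg.
  destruct (Z.eq_dec (Z.gcd a b) g) as [Eg|]; [|discriminate]. clear Hg.
  assert (Hg : 1 <= g).
  { pose proof (Z.gcd_nonneg a b). destruct (Z.eq_dec g 0) as [E0|]; [|lia].
    rewrite E0 in Eg. apply Z.gcd_eq_0 in Eg. destruct Eg; subst. simpl in HM. lia. }
  destruct (prim_of g a b Hg Eg) as [Ea [Eb Hc]].
  unfold pa, pb; cbn [fst snd].
  set (x := a / g) in *. set (y := b / g) in *.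
  assert (EM : M = g * g * (3 * x ^ 2 + y ^ 2)) by (rewrite <- Hs, Ea, Eb; ring).
  assert (EMp : M / (g * g) = 3 * x ^ 2 + y ^ 2).
  { rewrite EM, Z.mul_comm. apply Z.div_mul. lia. }
  rewrite EMp. repeat split; auto.
  - assert (0 < 3 * x ^ 2 + y ^ 2); [|lia].
    destruct (Z_lt_le_dec 0 (3 * x ^ 2 + y ^ 2)); auto.
    assert (g * g * (3 * x ^ 2 + y ^ 2) <= 0).
    { apply Z.mul_nonneg_nonpos; auto. apply Z.square_nonneg. }
    lia.
  - f_equal; auto.
Qed.

Lemma sq_eq_sign y y' : y ^ 2 = y' ^ 2 -> (0 <= y <-> 0 <= y') -> y = y'.
Proof.
  intros H1 H2. assert (H : (y - y') * (y + y') = 0) by (rewrite !Z.pow_2_r in H1; lia).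
  apply Z.mul_eq_0 in H. destruct H; [lia|]. destruct (Z_le_gt_dec 0 y); lia.
Qed.

Lemma small_sq j : j * j <= 12 -> -3 <= j <= 3.
Proof. intros H. destruct (Z_le_gt_dec j 3); destruct (Z_le_gt_dec (-3) j); try nia. Qed.

Lemma level3 M g s0 q : 1 <= M -> In s0 (L1 M g) ->
  (length (L2 M g (M / (g * g)) (pa g s0) (pb g s0) q) <= 14)%nat.
Proof.
  intros HM Hs0. unfold L2. apply fiber_nonempty. intros s1 Hs1 Hq.
  destruct (zz_dec (F2 g (M / (g * g)) (pa g s0) (pb g s0) s1) q) as [Eq1|]; [|discriminate].
  clear Hq.
  set (Mp := M / (g * g)) in *.
  destruct (L1_facts M g s0 HM Hs0) as [Hg [EM [HMp [E0 [P0 _]]]]].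
  destruct (L1_facts M g s1 HM Hs1) as [_ [_ [_ [E1 [P1 _]]]]].
  replace 14%nat with (length (list_prod (Zr (-3) 7) [true; false])) by reflexivity.
  set (a0 := pa g s0) in *. set (b0 := pb g s0) in *.
  set (a1 := pa g s1) in *. set (b1 := pb g s1) in *.
  assert (Key : forall s, In s (L2 M g Mp a0 b0 q) ->
    In s (L1 M g) /\ (Mp | 6 * (pb g s * a1 - b1 * pa g s)) /\
    3 * pa g s ^ 2 + pb g s ^ 2 = Mp).
  { intros s Hs. unfold L2 in Hs. apply filter_In in Hs. destruct Hs as [Hs Hq].
    destruct (zz_dec (F2 g Mp a0 b0 s) q) as [Eq|]; [|discriminate].
    destruct (L1_facts M g s HM Hs) as [_ [_ [_ [E [P _]]]]].
    split; auto. split; auto.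
    rewrite <- Eq1 in Eq. unfold F2 in Eq. injection Eq as Hu Hv.
    apply (prim_key Mp a0 b0 a1 b1); auto. }
  apply (inj_len _ _ (F3 g Mp a1 b1)).
  - apply NoDup_filter, NoDup_filter, sols_NoDup.
  - intros s s' Hs Hs' HF.
    destruct (Key s Hs) as [Hs1' [Hd E]]. destruct (Key s' Hs') as [Hs1'' [Hd' E']].
    assert (Hj : fst (F3 g Mp a1 b1 s) = fst (F3 g Mp a1 b1 s')) by (rewrite HF; reflexivity).
    assert (Hb : snd (F3 g Mp a1 b1 s) = snd (F3 g Mp a1 b1 s')) by (rewrite HF; reflexivity).
    unfold F3 in Hj, Hb. cbn [fst snd] in Hj, Hb.
    destruct Hd as [j Ej]. destruct Hd' as [j' Ej'].
    assert (HMp0 : Mp <> 0) by (clear - HMp; lia).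
    rewrite Ej, Ej' in Hj. rewrite !Z.div_mul in Hj by exact HMp0. subst j'.
    assert (HD : pb g s * a1 - b1 * pa g s = pb g s' * a1 - b1 * pa g s') by (clear - Ej Ej'; lia).
    pose proof (ident a1 b1 (pa g s) (pb g s)) as I1.
    pose proof (ident a1 b1 (pa g s') (pb g s')) as I2.
    rewrite E, E1 in I1. rewrite E', E1 in I2.
    assert (HY2 : (pb g s * b1 + 3 * pa g s * a1) ^ 2 = (pb g s' * b1 + 3 * pa g s' * a1) ^ 2).
    { rewrite HD in I1. clear - I1 I2. lia. }
    assert (HY : pb g s * b1 + 3 * pa g s * a1 = pb g s' * b1 + 3 * pa g s' * a1).
    { set (Y := pb g s * b1 + 3 * pa g s * a1) in *.
      set (Y' := pb g s' * b1 + 3 * pa g s' * a1) in *.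
      apply sq_eq_sign; auto. clear - Hb.
      destruct (Z.leb_spec 0 Y); destruct (Z.leb_spec 0 Y'); try discriminate; split; intros; lia. }
    destruct (recover Mp a1 b1 (pa g s) (pb g s) (pa g s') (pb g s')) as [Ha Hb']; auto.
    destruct (L1_facts M g s HM Hs1') as [_ [_ [_ [_ [_ Es]]]]].
    destruct (L1_facts M g s' HM Hs1'') as [_ [_ [_ [_ [_ Es']]]]].
    rewrite Es, Es', Ha, Hb'. reflexivity.
  - intros s Hs. destruct (Key s Hs) as [_ [[j Ej] E]].
    unfold F3. rewrite Ej, Z.div_mul by (clear - HMp; lia).
    apply in_prod; [apply Zr_In|destruct (Z.leb _ _); simpl; auto].
    pose proof (ident a1 b1 (pa g s) (pb g s)) as I1. rewrite E, E1 in I1.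
    set (D := pb g s * a1 - b1 * pa g s) in *.
    set (Y := pb g s * b1 + 3 * pa g s * a1) in *.
    assert (HY0 : 0 <= Y ^ 2) by (rewrite Z.pow_2_r; apply Z.square_nonneg).
    assert (H3 : 3 * D ^ 2 <= Mp * Mp) by (clear - I1 HY0; lia).
    assert (H36 : 36 * D ^ 2 = j * j * (Mp * Mp)).
    { replace (36 * D ^ 2) with ((6 * D) * (6 * D)) by ring. rewrite Ej. ring. }
    assert (H12 : j * j * (Mp * Mp) <= 12 * (Mp * Mp)) by (clear - H3 H36; lia).
    apply Z.mul_le_mono_pos_r in H12; [|clear - HMp; apply Z.mul_pos_pos; lia].
    apply small_sq in H12. clear - H12; lia.
Qed.

Lemma level2 M g : 1 <= M -> (length (L1 M g) <= 14 * (dcount M * dcount M))%nat.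
Proof.
  intros HM. unfold L1 at 1. apply fiber_nonempty. intros s0 Hs0 Hg0.
  assert (Hs0' : In s0 (L1 M g)) by (unfold L1; apply filter_In; auto).
  destruct (L1_facts M g s0 HM Hs0') as [Hg [EM [HMp _]]].
  set (Mp := M / (g * g)) in *.
  assert (HdM : (dcount Mp <= dcount M)%nat).
  { apply dcount_mono; [lia|]. exists (g * g). rewrite EM at 1. ring. }
  eapply Nat.le_trans.
  - apply (fiber_len zz_dec (L1 M g) (list_prod (divs Mp) (divs Mp))
             (F2 g Mp (pa g s0) (pb g s0)) 14).
    + intros s Hs. unfold F2. apply in_prod; apply divs_In; auto;
        (split; [apply gcd_pos_r; auto|apply Z.gcd_divide_r]).
    + intros q. apply (level3 M g s0 q HM Hs0').
  - rewrite length_prod. apply Nat.mul_le_mono_l. apply Nat.mul_le_mono; auto.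
Qed.

Theorem ellipse_count M : 1 <= M ->
  (length (sols M) <= 14 * (dcount M * dcount M) * dcount M)%nat.
Proof.
  intros HM.
  apply (fiber_len Z.eq_dec (sols M) (divs M) (fun s => Z.gcd (fst s) (snd s))).
  - intros [a b] Hs. apply sols_In in Hs; [|lia]. cbn [fst snd].
    apply divs_In; auto. split.
    + pose proof (Z.gcd_nonneg a b). destruct (Z.eq_dec (Z.gcd a b) 0) as [E0|]; [|lia].
      apply Z.gcd_eq_0 in E0. destruct E0; subst. simpl in HM. lia.
    + rewrite <- Hs. apply Z.divide_add_r.
      * apply Z.divide_mul_r. rewrite Z.pow_2_r. apply Z.divide_mul_l, Z.gcd_divide_l.
      * rewrite Z.pow_2_r. apply Z.divide_mul_l, Z.gcd_divide_r.
  - intros g. apply (level2 M g HM).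
Qed.

End M_NT7.
Import M_NT7.

Module M_LS.
Import ListNotations.
Local Open Scope R_scope.

Definition lsum {A} (l : list A) (f : A -> R) : R := fold_right (fun a s => f a + s) 0 l.
Definition lsumC {A} (l : list A) (f : A -> C) : C := fold_right (fun a s => Cplus (f a) s) (RtoC 0) l.

Lemma lsum_app {A} (l l' : list A) f : lsum (l ++ l') f = lsum l f + lsum l' f.
Proof. induction l; simpl; [ring|rewrite IHl; ring]. Qed.

Lemma lsum_ext {A} (l : list A) f g : (forall x, In x l -> f x = g x) -> lsum l f = lsum l g.
Proof.
  induction l; intros H; simpl; auto. rewrite H by (left; auto).
  rewrite IHl; auto. intros; apply H; right; auto.
Qed.

Lemma lsum_le {A} (l : list A) f g : (forall x, In x l -> f x <= g x) -> lsum l f <= lsum l g.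
Proof.
  induction l; intros H; simpl; [lra|]. apply Rplus_le_compat; simpl in *; auto.
Qed.

Lemma lsum_nonneg {A} (l : list A) f : (forall x, In x l -> 0 <= f x) -> 0 <= lsum l f.
Proof.
  intros H. replace 0 with (lsum l (fun _ => 0)).
  - apply lsum_le; auto.
  - induction l; simpl; auto. rewrite IHl; [ring|]. intros; apply H; simpl; auto.
Qed.

Lemma lsum_plus {A} (l : list A) f g : lsum l (fun x => f x + g x) = lsum l f + lsum l g.
Proof. induction l; simpl; [ring|rewrite IHl; ring]. Qed.

Lemma lsum_scal {A} (l : list A) a f : lsum l (fun x => a * f x) = a * lsum l f.
Proof. induction l; simpl; [ring|rewrite IHl; ring]. Qed.

Lemma lsum_zero {A} (l : list A) : lsum l (fun _ => 0) = 0.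
Proof. induction l; simpl; [ring|rewrite IHl; ring]. Qed.

Lemma lsum_prod {A B} (l : list A) (l' : list B) f :
  lsum (list_prod l l') f = lsum l (fun a => lsum l' (fun b => f (a, b))).
Proof.
  induction l; simpl; auto. rewrite lsum_app, IHl. f_equal.
  clear. induction l'; simpl; auto. rewrite IHl'; auto.
Qed.

Lemma lsum_comm {A B} (l : list A) (l' : list B) f :
  lsum l (fun a => lsum l' (fun b => f a b)) = lsum l' (fun b => lsum l (fun a => f a b)).
Proof.
  induction l; simpl.
  - rewrite lsum_zero; auto.
  - rewrite IHl, <- lsum_plus. auto.
Qed.

Lemma lsum_mult {A B} (l : list A) (l' : list B) f g :
  lsum l f * lsum l' g = lsum (list_prod l l') (fun p => f (fst p) * g (snd p)).
Proof.
  rewrite lsum_prod. simpl. rewrite Rmult_comm, <- (lsum_scal l (lsum l' g)).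
  apply lsum_ext. intros a _. rewrite Rmult_comm, <- lsum_scal. auto.
Qed.

Lemma lsumC_app {A} (l1 l2 : list A) h :
  lsumC (l1 ++ l2) h = Cplus (lsumC l1 h) (lsumC l2 h).
Proof.
  induction l1; simpl; unfold lsumC in *; simpl; [ring|]. rewrite IHl1; ring.
Qed.

Lemma lsumC_map_pair {A B} (a : A) (l' : list B) (F : A * B -> C) :
  lsumC (map (pair a) l') F = lsumC l' (fun b => F (a, b)).
Proof. induction l'; simpl; unfold lsumC in *; simpl; auto. rewrite IHl'; auto. Qed.

Lemma lsumC_scal {A} (l : list A) z f :
  Cmult z (lsumC l f) = lsumC l (fun x => Cmult z (f x)).
Proof. induction l; unfold lsumC in *; simpl; [ring|]. rewrite <- IHl; ring. Qed.

Lemma lsumC_mult {A B} (l : list A) (l' : list B) f g :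
  Cmult (lsumC l f) (lsumC l' g) = lsumC (list_prod l l') (fun p => Cmult (f (fst p)) (g (snd p))).
Proof.
  induction l as [|a l IH]; simpl.
  - unfold lsumC; simpl. ring.
  - rewrite lsumC_app, <- IH, lsumC_map_pair. simpl.
    rewrite <- lsumC_scal. unfold lsumC at 1; simpl. fold (lsumC l f). ring.
Qed.

Lemma lsumC_fst {A} (l : list A) f : fst (lsumC l f) = lsum l (fun x => fst (f x)).
Proof. induction l; simpl; auto. rewrite <- IHl. auto. Qed.

Lemma lsumC_snd {A} (l : list A) f : snd (lsumC l f) = lsum l (fun x => snd (f x)).
Proof. induction l; simpl; auto. rewrite <- IHl. auto. Qed.

Lemma sum_n_lsumC (f : nat -> C) n : sum_n f n = lsumC (seq 0 (S n)) f.
Proof.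
  induction n.
  - rewrite sum_O. unfold lsumC; simpl. change (f 0%nat = f 0%nat + 0)%C. ring.
  - rewrite sum_Sn, IHn, (seq_S (S n)), lsumC_app.
    replace (lsumC [(0 + S n)%nat] f) with (f (S n)) by (unfold lsumC; simpl; ring).
    reflexivity.
Qed.

Lemma lsum_seq_shift (f : nat -> R) s a n :
  lsum (seq (s + a) n) f = lsum (seq a n) (fun m => f (s + m)%nat).
Proof.
  revert a. induction n; intros a; simpl; auto.
  rewrite <- Nat.add_succ_r, IHn. auto.
Qed.

End M_LS.
Import M_LS.

Module M_INT.
Import ListNotations.
Local Open Scope R_scope.

Lemma trig_per_Z (K : Z) r : sin (r + 2 * IZR K * PI) = sin r /\ cos (r + 2 * IZR K * PI) = cos r.
Proof.
  destruct (Z_le_gt_dec 0 K) as [HK|HK].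
  - replace (IZR K) with (INR (Z.to_nat K)) by (rewrite INR_IZR_INZ; f_equal; lia).
    split; [apply sin_period|apply cos_period].
  - set (m := Z.to_nat (- K)).
    assert (E : IZR K = - INR m) by (unfold m; rewrite INR_IZR_INZ, <- opp_IZR; f_equal; lia).
    rewrite E.
    pose proof (sin_period (r + 2 * - INR m * PI) m) as H1.
    pose proof (cos_period (r + 2 * - INR m * PI) m) as H2.
    replace (r + 2 * - INR m * PI + 2 * INR m * PI) with r in H1, H2 by ring.
    split; auto.
Qed.

Lemma cos_int mu K r : 0 < mu ->
  RInt (fun x => cos (IZR K / mu * x + r)) 0 (2 * PI * mu) =
  if Z.eqb K 0 then 2 * PI * mu * cos r else 0.
Proof.
  intros Hmu. destruct (Z.eqb_spec K 0) as [->|HK].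
  - rewrite (RInt_ext _ (fun _ => cos r)).
    + rewrite RInt_const. unfold scal; simpl. unfold mult; simpl. ring.
    + intros x _. f_equal. unfold Rdiv; ring.
  - set (p := IZR K / mu).
    assert (Hp : p <> 0).
    { unfold p. apply Rmult_integral_contrapositive_currified; [apply not_0_IZR; auto|].
      apply Rinv_neq_0_compat; lra. }
    apply is_RInt_unique.
    assert (H : is_RInt (fun x => cos (p * x + r)) 0 (2 * PI * mu)
       (minus ((fun x => sin (p * x + r) / p) (2 * PI * mu)) ((fun x => sin (p * x + r) / p) 0))).
    { apply (is_RInt_derive (fun x => sin (p * x + r) / p)).
      * intros x _. auto_derive; auto. field; auto.
      * intros x _. apply (ex_derive_continuous (fun x => cos (p * x + r))). auto_derive; auto. }
    replace (minus _ _) with 0 in H; [exact H|].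
    simpl. unfold minus, plus, opp; simpl.
    replace (p * (2 * PI * mu) + r) with (r + 2 * IZR K * PI) by (unfold p; field; lra).
    rewrite (proj1 (trig_per_Z K r)). replace (p * 0 + r) with r by ring. field; auto.
Qed.

Lemma sin_int mu K r : 0 < mu ->
  RInt (fun x => sin (IZR K / mu * x + r)) 0 (2 * PI * mu) =
  if Z.eqb K 0 then 2 * PI * mu * sin r else 0.
Proof.
  intros Hmu. destruct (Z.eqb_spec K 0) as [->|HK].
  - rewrite (RInt_ext _ (fun _ => sin r)).
    + rewrite RInt_const. unfold scal; simpl. unfold mult; simpl. ring.
    + intros x _. f_equal. unfold Rdiv; ring.
  - set (p := IZR K / mu).
    assert (Hp : p <> 0).
    { unfold p. apply Rmult_integral_contrapositive_currified; [apply not_0_IZR; auto|].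
      apply Rinv_neq_0_compat; lra. }
    apply is_RInt_unique.
    assert (H : is_RInt (fun x => sin (p * x + r)) 0 (2 * PI * mu)
       (minus ((fun x => - cos (p * x + r) / p) (2 * PI * mu)) ((fun x => - cos (p * x + r) / p) 0))).
    { apply (is_RInt_derive (fun x => - cos (p * x + r) / p)).
      * intros x _. auto_derive; auto. field; auto.
      * intros x _. apply (ex_derive_continuous (fun x => sin (p * x + r))). auto_derive; auto. }
    replace (minus _ _) with 0 in H; [exact H|].
    simpl. unfold minus, plus, opp; simpl.
    replace (p * (2 * PI * mu) + r) with (r + 2 * IZR K * PI) by (unfold p; field; lra).
    rewrite (proj2 (trig_per_Z K r)). replace (p * 0 + r) with r by ring. field; auto.
Qed.

Definition tt mu A B (a : Z) r x := A * cos (IZR a / mu * x + r) + B * sin (IZR a / mu * x + r).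

Lemma tt_ex mu A B a r u v : ex_RInt (tt mu A B a r) u v.
Proof.
  apply (@ex_RInt_continuous R_CompleteNormedModule). intros z _. unfold tt.
  apply (ex_derive_continuous (fun x => A * cos (IZR a / mu * x + r) + B * sin (IZR a / mu * x + r))).
  auto_derive; auto.
Qed.

Lemma tt_int mu A B a r : 0 < mu ->
  RInt (tt mu A B a r) 0 (2 * PI * mu) =
  if Z.eqb a 0 then 2 * PI * mu * (A * cos r + B * sin r) else 0.
Proof.
  intros Hmu. unfold tt.
  assert (E1 : ex_RInt (fun x => cos (IZR a / mu * x + r)) 0 (2 * PI * mu)).
  { apply (@ex_RInt_continuous R_CompleteNormedModule). intros z _.
    apply (ex_derive_continuous (fun x => cos (IZR a / mu * x + r))). auto_derive; auto. }
  assert (E2 : ex_RInt (fun x => sin (IZR a / mu * x + r)) 0 (2 * PI * mu)).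
  { apply (@ex_RInt_continuous R_CompleteNormedModule). intros z _.
    apply (ex_derive_continuous (fun x => sin (IZR a / mu * x + r))). auto_derive; auto. }
  rewrite (RInt_plus (fun x => A * cos (IZR a / mu * x + r)) (fun x => B * sin (IZR a / mu * x + r))).
  2: { apply (ex_RInt_scal _ _ _ A) in E1. exact E1. }
  2: { apply (ex_RInt_scal _ _ _ B) in E2. exact E2. }
  assert (R1 : RInt (fun x => A * cos (IZR a / mu * x + r)) 0 (2 * PI * mu) =
     A * RInt (fun x => cos (IZR a / mu * x + r)) 0 (2 * PI * mu)) by apply (RInt_scal _ _ _ A E1).
  assert (R2 : RInt (fun x => B * sin (IZR a / mu * x + r)) 0 (2 * PI * mu) =
     B * RInt (fun x => sin (IZR a / mu * x + r)) 0 (2 * PI * mu)) by apply (RInt_scal _ _ _ B E2).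
  unfold plus; simpl. rewrite R1, R2.
  rewrite cos_int, sin_int by auto. unfold plus, scal; simpl; unfold mult; simpl.
  destruct (Z.eqb a 0); ring.
Qed.

Definition lsum_f {A} (l : list A) (f : A -> R -> R) := fun x => lsum l (fun p => f p x).

Lemma ex_RInt_lsum {A} (l : list A) f u v : (forall p, In p l -> ex_RInt (f p) u v) ->
  ex_RInt (fun x => lsum l (fun p => f p x)) u v.
Proof.
  induction l as [|a l IH]; intros H; simpl.
  - apply ex_RInt_const.
  - apply (ex_RInt_plus (f a) (fun x => lsum l (fun p => f p x))).
    + apply H; left; auto.
    + apply IH; intros; apply H; right; auto.
Qed.

Lemma RInt_lsum {A} (l : list A) f u v : (forall p, In p l -> ex_RInt (f p) u v) ->
  RInt (fun x => lsum l (fun p => f p x)) u v = lsum l (fun p => RInt (f p) u v).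
Proof.
  induction l as [|a l IH]; intros H; simpl.
  - rewrite RInt_const. unfold scal; simpl; unfold mult; simpl. ring.
  - rewrite (RInt_plus (f a) (fun x => lsum l (fun p => f p x))).
    + rewrite IH; auto. intros; apply H; right; auto.
    + apply H; left; auto.
    + apply ex_RInt_lsum; intros; apply H; right; auto.
Qed.

Lemma double_int {I} (l : list I) lam (A B : I -> R) (a b : I -> Z) : 0 < lam ->
  RInt (fun t => RInt (fun x => lsum l (fun p =>
          A p * cos (IZR (a p) / lam * x + IZR (b p) / lam ^ 2 * t) +
          B p * sin (IZR (a p) / lam * x + IZR (b p) / lam ^ 2 * t))) 0 (2 * PI * lam))
       0 (2 * PI * lam ^ 2) =
  lsum l (fun p => if andb (Z.eqb (a p) 0) (Z.eqb (b p) 0) then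
                     2 * PI * lam * (2 * PI * lam ^ 2) * A p else 0).
Proof.
  intros Hl.
  assert (Hl2 : 0 < lam ^ 2) by (apply pow_lt; auto).
  rewrite (RInt_ext _ (fun t => lsum l (fun p =>
     tt (lam ^ 2) (if Z.eqb (a p) 0 then 2 * PI * lam * A p else 0)
                  (if Z.eqb (a p) 0 then 2 * PI * lam * B p else 0) (b p) 0 t))).
  2: { intros t _.
       rewrite (RInt_lsum l (fun p x => tt lam (A p) (B p) (a p) (IZR (b p) / lam ^ 2 * t) x)).
       2: { intros; apply tt_ex. }
       apply lsum_ext. intros p _. rewrite tt_int by auto. unfold tt.
       destruct (Z.eqb (a p) 0); [|ring].
       replace (IZR (b p) / lam ^ 2 * t + 0) with (IZR (b p) / lam ^ 2 * t) by ring. ring. }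
  rewrite RInt_lsum by (intros; apply tt_ex).
  apply lsum_ext. intros p _. rewrite tt_int by auto.
  rewrite cos_0, sin_0.
  destruct (Z.eqb (a p) 0); destruct (Z.eqb (b p) 0); simpl; ring.
Qed.

End M_INT.
Import M_INT.

Module M_PW.
Import ListNotations.
Local Open Scope R_scope.

Definition kk (N n : nat) : Z := (Z.of_nat n - Z.of_nat N)%Z.
Definition Idx (N : nat) := seq 0 (S (2 * N)).
Definition Tr (N : nat) := list_prod (list_prod (Idx N) (Idx N)) (Idx N).
Definition k1 N (j : (nat * nat) * nat) := kk N (fst (fst j)).
Definition k2 N (j : (nat * nat) * nat) := kk N (snd (fst j)).
Definition k3 N (j : (nat * nat) * nat) := kk N (snd j).
Definition KK N j := (k1 N j + k2 N j + k3 N j)%Z.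
Definition LL N j := (k1 N j * k1 N j + k2 N j * k2 N j + k3 N j * k3 N j)%Z.
Definition beta (c : Z -> C) N j : C := Cmult (Cmult (c (k1 N j)) (c (k2 N j))) (c (k3 N j)).
Definition Aj c N (jj : ((nat * nat) * nat) * ((nat * nat) * nat)) :=
  fst (beta c N (fst jj)) * fst (beta c N (snd jj)) + snd (beta c N (fst jj)) * snd (beta c N (snd jj)).
Definition Bj c N (jj : ((nat * nat) * nat) * ((nat * nat) * nat)) :=
  fst (beta c N (fst jj)) * snd (beta c N (snd jj)) - snd (beta c N (fst jj)) * fst (beta c N (snd jj)).

Lemma eix_add a b : Cmult (eix a) (eix b) = eix (a + b).
Proof.
  unfold eix, Cmult; simpl. rewrite cos_plus, sin_plus. f_equal; ring.
Qed.

Lemma pair_term (be be' : C) th th' :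
  fst (Cmult be (eix th)) * fst (Cmult be' (eix th')) + snd (Cmult be (eix th)) * snd (Cmult be' (eix th')) =
  (fst be * fst be' + snd be * snd be') * cos (th - th') +
  (fst be * snd be' - snd be * fst be') * sin (th - th').
Proof.
  destruct be as [p q]; destruct be' as [p' q']. unfold eix, Cmult; simpl.
  rewrite cos_minus, sin_minus. ring.
Qed.

Lemma Cmod_sq (z : C) : Cmod z ^ 2 = fst z ^ 2 + snd z ^ 2.
Proof.
  unfold Cmod. rewrite pow2_sqrt; auto. pose proof (pow2_ge_0 (fst z)); pose proof (pow2_ge_0 (snd z)); lra.
Qed.

Lemma Cmod_lsum_sq {A} (l : list A) g :
  Cmod (lsumC l g) ^ 2 = lsum (list_prod l l) (fun p => fst (g (fst p)) * fst (g (snd p)) + snd (g (fst p)) * snd (g (snd p))).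
Proof.
  rewrite Cmod_sq, lsumC_fst, lsumC_snd. rewrite !(Rpow_mult_distr _ _ 2) || idtac.
  replace (lsum l (fun x => fst (g x)) ^ 2) with (lsum l (fun x => fst (g x)) * lsum l (fun x => fst (g x))) by ring.
  replace (lsum l (fun x => snd (g x)) ^ 2) with (lsum l (fun x => snd (g x)) * lsum l (fun x => snd (g x))) by ring.
  rewrite !lsum_mult, <- lsum_plus. auto.
Qed.

Definition phi lam t x N n := phase lam t x (kk N n).
Definition Th lam t x N (j : (nat * nat) * nat) :=
  phi lam t x N (fst (fst j)) + phi lam t x N (snd (fst j)) + phi lam t x N (snd j).

Lemma Th_diff lam t x N j j' : 0 < lam ->
  Th lam t x N j - Th lam t x N j' =
  IZR (KK N j - KK N j') / lam * x + IZR (LL N j' - LL N j) / lam ^ 2 * t.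
Proof.
  intros Hl. unfold Th, phi, phase, freq, KK, LL, k1, k2, k3.
  rewrite !minus_IZR, !plus_IZR, !mult_IZR. field. lra.
Qed.

Lemma pointwise lam c N t x : 0 < lam ->
  Cmod (lin_sol_trunc lam c N t x) ^ 6 = (/ (2 * PI * lam)) ^ 6 *
  lsum (list_prod (Tr N) (Tr N)) (fun jj =>
     Aj c N jj * cos (IZR (KK N (fst jj) - KK N (snd jj)) / lam * x + IZR (LL N (snd jj) - LL N (fst jj)) / lam ^ 2 * t) +
     Bj c N jj * sin (IZR (KK N (fst jj) - KK N (snd jj)) / lam * x + IZR (LL N (snd jj) - LL N (fst jj)) / lam ^ 2 * t)).
Proof.
  intros Hl. unfold lin_sol_trunc.
  set (f := fun n => Cmult (c (kk N n)) (eix (phi lam t x N n))).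
  replace (sum_n _ (2 * N)) with (sum_n f (2 * N)) by reflexivity.
  rewrite sum_n_lsumC. fold (Idx N).
  assert (Hk : 0 < / (2 * PI * lam)) by (apply Rinv_0_lt_compat; pose proof PI_RGT_0; nra).
  rewrite Cmod_mult, Cmod_R, Rabs_pos_eq by lra.
  rewrite Rpow_mult_distr. f_equal.
  set (S := lsumC (Idx N) f).
  replace (Cmod S ^ 6) with (Cmod (Cmult (Cmult S S) S) ^ 2)
    by (rewrite !Cmod_mult; ring).
  unfold S. rewrite !lsumC_mult. fold (Tr N).
  rewrite Cmod_lsum_sq. apply lsum_ext. intros [j j'] _. cbn [fst snd].
  assert (Hg : forall j0 : (nat * nat) * nat,
    Cmult (Cmult (f (fst (fst j0))) (f (snd (fst j0)))) (f (snd j0)) =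
    Cmult (beta c N j0) (eix (Th lam t x N j0))).
  { intros j0. unfold f, beta, Th, k1, k2, k3.
    rewrite <- !eix_add. ring. }
  rewrite !Hg, pair_term, Th_diff by auto. unfold Aj, Bj. cbn [fst snd]. auto.
Qed.

End M_PW.
Import M_PW.

Module M_MAIN1.
Import ListNotations.
Local Open Scope R_scope.

Lemma integral_value lam c N : 0 < lam ->
  RInt (fun t => RInt (fun x => Cmod (lin_sol_trunc lam c N t x) ^ 6) 0 (2 * PI * lam)) 0 (2 * PI * lam ^ 2) =
  lsum (list_prod (Tr N) (Tr N)) (fun jj =>
    if andb (Z.eqb (KK N (fst jj) - KK N (snd jj)) 0) (Z.eqb (LL N (snd jj) - LL N (fst jj)) 0)
    then 2 * PI * lam * (2 * PI * lam ^ 2) * ((/ (2 * PI * lam)) ^ 6 * Aj c N jj) else 0).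
Proof.
  intros Hl.
  set (k6 := (/ (2 * PI * lam)) ^ 6).
  rewrite (RInt_ext _ (fun t => RInt (fun x => lsum (list_prod (Tr N) (Tr N)) (fun p =>
     (k6 * Aj c N p) * cos (IZR (KK N (fst p) - KK N (snd p)) / lam * x + IZR (LL N (snd p) - LL N (fst p)) / lam ^ 2 * t) +
     (k6 * Bj c N p) * sin (IZR (KK N (fst p) - KK N (snd p)) / lam * x + IZR (LL N (snd p) - LL N (fst p)) / lam ^ 2 * t)))
     0 (2 * PI * lam))).
  - apply (double_int (list_prod (Tr N) (Tr N)) lam (fun p => k6 * Aj c N p) (fun p => k6 * Bj c N p)
      (fun p => (KK N (fst p) - KK N (snd p))%Z) (fun p => (LL N (snd p) - LL N (fst p))%Z) Hl).
  - intros t _. apply RInt_ext. intros x _. rewrite pointwise by auto. fold k6.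
    rewrite <- lsum_scal. apply lsum_ext; intros; ring.
Qed.

End M_MAIN1.
Import M_MAIN1.

Module M_CS.
Import ListNotations.
Local Open Scope R_scope.

Lemma amgm a b r : 0 < r -> a * b <= / 2 * (r * a ^ 2 + / r * b ^ 2).
Proof.
  intros Hr.
  assert (H : 0 <= r * (r * a ^ 2 + / r * b ^ 2 - 2 * (a * b))).
  { replace (r * (r * a ^ 2 + / r * b ^ 2 - 2 * (a * b))) with ((r * a - b) ^ 2) by (field; lra).
    apply pow2_ge_0. }
  assert (0 <= r * a ^ 2 + / r * b ^ 2 - 2 * (a * b)).
  { destruct (Rle_or_lt 0 (r * a ^ 2 + / r * b ^ 2 - 2 * (a * b))); auto. nra. }
  lra.
Qed.

Lemma cs_bound {I} (T : list I) (same : I -> I -> bool) (w b : I -> R) (C : R) :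
  (forall j, 0 < w j) -> (forall j j', same j j' = same j' j) ->
  (forall j, In j T -> lsum T (fun j' => if same j j' then / w j' else 0) <= C) ->
  lsum (list_prod T T) (fun p => if same (fst p) (snd p) then b (fst p) * b (snd p) else 0)
  <= C * lsum T (fun j => w j * b j ^ 2).
Proof.
  intros Hw Hs Hc.
  eapply Rle_trans.
  { apply lsum_le. intros p _.
    instantiate (1 := fun p => / 2 * ((if same (fst p) (snd p) then w (fst p) * b (fst p) ^ 2 * / w (snd p) else 0)
                        + (if same (snd p) (fst p) then w (snd p) * b (snd p) ^ 2 * / w (fst p) else 0))).
    cbv beta. rewrite (Hs (snd p)). destruct (same (fst p) (snd p)); [|lra].
    pose proof (amgm (b (fst p)) (b (snd p)) (w (fst p) / w (snd p))).
    pose proof (Hw (fst p)); pose proof (Hw (snd p)).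
    replace (/ (w (fst p) / w (snd p))) with (w (snd p) / w (fst p)) in H by (field; lra).
    replace (w (fst p) * b (fst p) ^ 2 * / w (snd p)) with (w (fst p) / w (snd p) * b (fst p) ^ 2) by (field; lra).
    replace (w (snd p) * b (snd p) ^ 2 * / w (fst p)) with (w (snd p) / w (fst p) * b (snd p) ^ 2) by (field; lra).
    apply H. apply Rdiv_lt_0_compat; auto. }
  rewrite lsum_scal, lsum_plus, !lsum_prod. cbn [fst snd].
  rewrite (lsum_comm T T (fun a b0 => if same b0 a then w b0 * b b0 ^ 2 * / w a else 0)).
  assert (Hk : lsum T (fun a => lsum T (fun b0 => if same a b0 then w a * b a ^ 2 * / w b0 else 0))
            <= C * lsum T (fun j => w j * b j ^ 2)).
  { rewrite <- lsum_scal. apply lsum_le. intros a Ha.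
    replace (lsum T (fun b0 => if same a b0 then w a * b a ^ 2 * / w b0 else 0)) with
      (w a * b a ^ 2 * lsum T (fun b0 => if same a b0 then / w b0 else 0)).
    - rewrite Rmult_comm. apply Rmult_le_compat_r; [|apply Hc; auto].
      pose proof (Hw a); pose proof (pow2_ge_0 (b a)); nra.
    - rewrite <- lsum_scal. apply lsum_ext; intros; destruct (same a x); ring. }
  lra.
Qed.

End M_CS.
Import M_CS.

Module M_CNT.
Import ListNotations.
Local Open Scope R_scope.

Definition same N (j j' : (nat * nat) * nat) : bool :=
  andb (Z.eqb (KK N j - KK N j') 0) (Z.eqb (LL N j' - LL N j) 0).
Definition Wk d (k : Z) := Rpower (1 + IZR k ^ 2) d.
Definition wj d N j := Wk d (k1 N j) * Wk d (k2 N j) * Wk d (k3 N j).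

Lemma same_sym N j j' : same N j j' = same N j' j.
Proof.
  unfold same. destruct (Z.eqb_spec (KK N j - KK N j') 0); destruct (Z.eqb_spec (KK N j' - KK N j) 0);
  destruct (Z.eqb_spec (LL N j' - LL N j) 0); destruct (Z.eqb_spec (LL N j - LL N j') 0); simpl; auto; lia.
Qed.

Lemma lsum_ind {A} (l : list A) (f : A -> bool) a :
  lsum l (fun x => if f x then a else 0) = a * INR (length (filter f l)).
Proof.
  induction l as [|x l IH]; cbn [fold_right filter length lsum]; [unfold lsum; simpl; ring|].
  unfold lsum in *. simpl. rewrite IH. destruct (f x); cbn [length]; [rewrite S_INR|]; ring.
Qed.

Definition Mof N j : Z := (6 * LL N j - 2 * (KK N j * KK N j))%Z.

Lemma Mof_eq N j : Mof N j = (3 * (k1 N j - k2 N j) ^ 2 + (k1 N j + k2 N j - 2 * k3 N j) ^ 2)%Z.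
Proof. unfold Mof, LL, KK. ring. Qed.

Lemma Rpower_pos x y : 0 < Rpower x y.
Proof. unfold Rpower; apply exp_pos. Qed.

Lemma term_bound d N j : 0 < d ->
  / wj d N j <= Rpower 8 d / Rpower (1 + IZR (Mof N j)) d.
Proof.
  intros Hd. unfold wj, Wk.
  set (a := IZR (k1 N j)). set (b := IZR (k2 N j)). set (c := IZR (k3 N j)).
  assert (HM : IZR (Mof N j) = 3 * (a - b) ^ 2 + (a + b - 2 * c) ^ 2).
  { unfold Mof, LL, KK, a, b, c. repeat rewrite ?plus_IZR, ?minus_IZR, ?mult_IZR. ring. }
  rewrite HM.
  assert (Ha : 0 < 1 + a ^ 2) by (pose proof (pow2_ge_0 a); lra).
  assert (Hb : 0 < 1 + b ^ 2) by (pose proof (pow2_ge_0 b); lra).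
  assert (Hc : 0 < 1 + c ^ 2) by (pose proof (pow2_ge_0 c); lra).
  rewrite !Rpower_mult_distr by (try apply Rmult_lt_0_compat; auto).
  set (P := (1 + a ^ 2) * (1 + b ^ 2) * (1 + c ^ 2)).
  set (Q := 1 + (3 * (a - b) ^ 2 + (a + b - 2 * c) ^ 2)).
  assert (HQ : 0 < Q) by (unfold Q; pose proof (pow2_ge_0 (a - b)); pose proof (pow2_ge_0 (a + b - 2 * c)); lra).
  assert (HQP : Q / 8 <= P).
  { assert (E : 8 * P - Q = 7 + 2 * ((a + b) ^ 2 + (a + c) ^ 2 + (b + c) ^ 2) +
       8 * (a ^ 2 * b ^ 2 + a ^ 2 * c ^ 2 + b ^ 2 * c ^ 2 + a ^ 2 * b ^ 2 * c ^ 2)) by (unfold P, Q; ring).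
    assert (0 <= a ^ 2 * b ^ 2 + a ^ 2 * c ^ 2 + b ^ 2 * c ^ 2 + a ^ 2 * b ^ 2 * c ^ 2).
    { replace (a ^ 2 * b ^ 2 + a ^ 2 * c ^ 2 + b ^ 2 * c ^ 2 + a ^ 2 * b ^ 2 * c ^ 2) with
        ((a * b) ^ 2 + (a * c) ^ 2 + (b * c) ^ 2 + (a * b * c) ^ 2) by ring.
      pose proof (pow2_ge_0 (a * b)); pose proof (pow2_ge_0 (a * c)); pose proof (pow2_ge_0 (b * c));
      pose proof (pow2_ge_0 (a * b * c)); lra. }
    pose proof (pow2_ge_0 (a + b)); pose proof (pow2_ge_0 (a + c)); pose proof (pow2_ge_0 (b + c)).
    lra. }
  assert (HP : 0 < P) by (unfold P; repeat apply Rmult_lt_0_compat; auto).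
  assert (H1 : Rpower (Q / 8) d <= Rpower P d) by (apply Rle_Rpower_l; lra).
  replace (Rpower 8 d / Rpower Q d) with (/ Rpower (Q / 8) d).
  - apply Rinv_le_contravar; auto. apply Rpower_pos.
  - assert (E : Rpower Q d = Rpower (Q / 8) d * Rpower 8 d).
    { rewrite Rpower_mult_distr by lra. f_equal. field. }
    rewrite E. pose proof (Rpower_pos (Q / 8) d). pose proof (Rpower_pos 8 d). field. lra.
Qed.

Lemma Tr_NoDup N : NoDup (Tr N).
Proof. unfold Tr, Idx. repeat apply NoDup_list_prod; apply seq_NoDup. Qed.

Lemma Mof_nonneg N j : (0 <= Mof N j)%Z.
Proof.
  rewrite Mof_eq, !Z.pow_2_r.
  pose proof (Z.square_nonneg (k1 N j - k2 N j)); pose proof (Z.square_nonneg (k1 N j + k2 N j - 2 * k3 N j)).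
  lia.
Qed.

Lemma class_count N j : (length (filter (same N j) (Tr N)) <= length (sols (Mof N j)))%nat.
Proof.
  apply (inj_len _ _ (fun j' => (k1 N j' - k2 N j', k1 N j' + k2 N j' - 2 * k3 N j')%Z)).
  - apply NoDup_filter, Tr_NoDup.
  - intros [[a1 a2] a3] [[b1 b2] b3] Ha Hb H.
    apply filter_In in Ha; apply filter_In in Hb. destruct Ha as [_ Ha]; destruct Hb as [_ Hb].
    unfold same in Ha, Hb. apply andb_prop in Ha; apply andb_prop in Hb.
    destruct Ha as [Ha _]; destruct Hb as [Hb _]. apply Z.eqb_eq in Ha; apply Z.eqb_eq in Hb.
    assert (H1 := f_equal fst H). assert (H2 := f_equal snd H). cbn [fst snd] in H1, H2. clear H.
    unfold KK, k1, k2, k3, kk in *. cbn [fst snd] in *.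
    assert (a3 = b3) by lia. assert (a1 = b1) by lia. assert (a2 = b2) by lia. subst; auto.
  - intros j' Hj'. apply filter_In in Hj'. destruct Hj' as [_ Hs].
    unfold same in Hs. apply andb_prop in Hs. destruct Hs as [H1 H2].
    apply Z.eqb_eq in H1; apply Z.eqb_eq in H2.
    apply sols_In; [apply Mof_nonneg|].
    assert (E : Mof N j = Mof N j') by (unfold Mof; rewrite (Z.sub_move_0_r _ _) in H1, H2 || idtac;
      assert (KK N j = KK N j') by lia; assert (LL N j = LL N j') by lia; congruence).
    rewrite E, Mof_eq. reflexivity.
Qed.

Lemma sols0 : length (sols 0) = 1%nat.
Proof. reflexivity. Qed.

Lemma count_bound d : 0 < d -> exists C, 0 <= C /\
  forall N j, lsum (Tr N) (fun j' => if same N j j' then / wj d N j' else 0) <= C.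
Proof.
  intros Hd. destruct (divisor_bound (d / 3)) as [Cd [HCd HD]]; [lra|].
  exists (Rpower 8 d * (1 + 14 * Cd ^ 3)).
  split. { pose proof (Rpower_pos 8 d). pose proof (pow_lt Cd 3 HCd). nra. }
  intros N j.
  set (M := Mof N j).
  assert (HM0 : (0 <= M)%Z) by apply Mof_nonneg.
  set (q := Rpower 8 d / Rpower (1 + IZR M) d).
  assert (Hq : 0 <= q) by (unfold q; pose proof (Rpower_pos 8 d); pose proof (Rpower_pos (1 + IZR M) d);
                           apply Rle_mult_inv_pos; lra).
  eapply Rle_trans.
  { apply (lsum_le _ _ (fun j' => if same N j j' then q else 0)). intros j' _.
    destruct (same N j j') eqn:Es; [|lra].
    assert (E : Mof N j' = M).
    { unfold same in Es. apply andb_prop in Es. destruct Es as [H1 H2].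
      apply Z.eqb_eq in H1; apply Z.eqb_eq in H2. unfold M, Mof.
      assert (KK N j = KK N j') by lia. assert (LL N j = LL N j') by lia. rewrite H, H0. auto. }
    pose proof (term_bound d N j' Hd). rewrite E in H. exact H. }
  rewrite lsum_ind.
  assert (HL := class_count N j). fold M in HL. apply le_INR in HL.
  apply Rle_trans with (q * INR (length (sols M))); [apply Rmult_le_compat_l; auto|].
  destruct (Z.eq_dec M 0) as [E0|E0].
  - unfold q. rewrite E0, sols0. change (INR 1) with 1.
    replace (1 + IZR 0) with 1 by (simpl; ring). rewrite Rpower_1_base.
    pose proof (Rpower_pos 8 d). pose proof (pow_lt Cd 3 HCd). 
    replace (Rpower 8 d / 1 * 1) with (Rpower 8 d * 1) by field. apply Rmult_le_compat_l; lra.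
  - assert (HM1 : (1 <= M)%Z) by lia.
    pose proof (ellipse_count M HM1) as HE. apply le_INR in HE.
    rewrite !mult_INR in HE. pose proof (HD M HM1) as HDM.
    pose proof (pos_INR (dcount M)).
    set (x := Rpower (IZR M) (d / 3)) in *.
    assert (Hx : x ^ 3 = Rpower (IZR M) d).
    { unfold x. rewrite <- Rpower_pow by apply Rpower_pos. rewrite Rpower_mult. f_equal. simpl. field. }
    assert (HMle : Rpower (IZR M) d <= Rpower (1 + IZR M) d).
    { apply Rle_Rpower_l; [lra|]. split; [apply IZR_lt; lia|lra]. }
    assert (Hd3 : INR (dcount M) ^ 3 <= (Cd * x) ^ 3) by (apply pow_incr; lra).
    assert (HL2 : INR (length (sols M)) <= 14 * (Cd ^ 3 * Rpower (1 + IZR M) d)).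
    { rewrite Rpow_mult_distr, Hx in Hd3.
      assert (INR (dcount M) * INR (dcount M) * INR (dcount M) = INR (dcount M) ^ 3) by ring.
      simpl INR in HE. pose proof (pow_lt Cd 3 HCd). nra. }
    unfold q.
    apply Rle_trans with (Rpower 8 d / Rpower (1 + IZR M) d * (14 * (Cd ^ 3 * Rpower (1 + IZR M) d))).
    + apply Rmult_le_compat_l; auto.
    + pose proof (Rpower_pos (1 + IZR M) d). pose proof (Rpower_pos 8 d).
      replace (Rpower 8 d / Rpower (1 + IZR M) d * (14 * (Cd ^ 3 * Rpower (1 + IZR M) d)))
        with (Rpower 8 d * (14 * Cd ^ 3)) by (field; lra).
      apply Rmult_le_compat_l; lra.
Qed.

End M_CNT.
Import M_CNT.

Module M_FIN1.
Import ListNotations.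
Local Open Scope R_scope.

Lemma sum_n_lsum (f : nat -> R) n : sum_n f n = lsum (seq 0 (S n)) f.
Proof.
  induction n.
  - rewrite sum_O. simpl. ring.
  - rewrite sum_Sn, IHn, (seq_S (S n)), lsum_app. simpl. unfold plus; simpl. ring.
Qed.

Lemma partial_le_Series (a : nat -> R) n : (forall k, 0 <= a k) -> ex_series a ->
  lsum (seq 0 n) a <= Series a.
Proof.
  intros Ha He.
  assert (Hl : is_lim_seq (sum_n a) (Series a)) by (apply Series_correct in He; exact He).
  assert (Hc := is_lim_seq_incr_compare _ _ Hl).
  assert (Hinc : forall k, sum_n a k <= sum_n a (S k)).
  { intros k. rewrite sum_Sn. unfold plus; simpl. pose proof (Ha (S k)); lra. }
  destruct n.
  - simpl. specialize (Hc Hinc 0%nat). rewrite sum_O in Hc. pose proof (Ha 0%nat); lra.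
  - rewrite <- sum_n_lsum. apply Hc; auto.
Qed.

Lemma lsum_cons {A} (a : A) l f : lsum (a :: l) f = f a + lsum l f.
Proof. reflexivity. Qed.

Lemma refl_sum (h : Z -> R) N :
  lsum (seq 0 N) (fun n => h (Z.of_nat n - Z.of_nat N)%Z) =
  lsum (seq 0 N) (fun m => h (- Z.of_nat (S m))%Z).
Proof.
  induction N as [|N IH]; [reflexivity|].
  assert (L : lsum (seq 0 (S N)) (fun n => h (Z.of_nat n - Z.of_nat (S N))%Z) =
              h (- Z.of_nat (S N))%Z + lsum (seq 0 N) (fun n => h (Z.of_nat n - Z.of_nat N)%Z)).
  { change (seq 0 (S N)) with (0%nat :: seq (1 + 0) N). rewrite lsum_cons, lsum_seq_shift.
    rewrite (lsum_ext _ _ (fun n => h (Z.of_nat n - Z.of_nat N)%Z)) by (intros m _; f_equal; lia).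
    replace (Z.of_nat 0 - Z.of_nat (S N))%Z with (- Z.of_nat (S N))%Z by lia. reflexivity. }
  assert (R : lsum (seq 0 (S N)) (fun m => h (- Z.of_nat (S m))%Z) =
              lsum (seq 0 N) (fun m => h (- Z.of_nat (S m))%Z) + h (- Z.of_nat (S N))%Z).
  { rewrite seq_S, lsum_app. simpl. ring. }
  rewrite L, R, IH. ring.
Qed.

Lemma Idx_split (h : Z -> R) N :
  lsum (Idx N) (fun n => h (kk N n)) =
  lsum (seq 0 N) (fun m => h (- Z.of_nat (S m))%Z) + lsum (seq 0 (S N)) (fun m => h (Z.of_nat m)).
Proof.
  unfold Idx. replace (S (2 * N)) with (N + S N)%nat by lia.
  rewrite seq_app, lsum_app. unfold kk. rewrite refl_sum. f_equal.
  replace (0 + N)%nat with (N + 0)%nat by lia. rewrite lsum_seq_shift.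
  apply lsum_ext; intros m _. f_equal. lia.
Qed.

Lemma hs_nonneg eps lam c k : 0 <= hs_term eps lam c k.
Proof.
  unfold hs_term. apply Rmult_le_pos; [left; apply Rpower_pos|apply pow2_ge_0].
Qed.

Lemma hs_sum_bound eps lam c N : in_Hs eps lam c ->
  lsum (Idx N) (fun n => hs_term eps lam c (kk N n)) <=
  Series (hs_pos eps lam c) + Series (hs_neg eps lam c).
Proof.
  intros [Hp Hn]. rewrite Idx_split. rewrite Rplus_comm. apply Rplus_le_compat.
  - apply (partial_le_Series (hs_pos eps lam c)); auto. intros; apply hs_nonneg.
  - apply (partial_le_Series (hs_neg eps lam c)); auto. intros; apply hs_nonneg.
Qed.

Lemma Wk_bound eps lam k : 0 < eps -> 1 <= lam ->
  Wk eps k <= Rpower lam (2 * eps) * Rpower (japan (freq lam k)) (2 * eps).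
Proof.
  intros He Hl. unfold Wk, japan, freq.
  assert (Hq : 0 < 1 + (IZR k / lam) ^ 2) by (pose proof (pow2_ge_0 (IZR k / lam)); lra).
  rewrite <- Rpower_sqrt by auto. rewrite Rpower_mult.
  replace (/ 2 * (2 * eps)) with eps by field.
  replace (Rpower lam (2 * eps)) with (Rpower (lam ^ 2) eps).
  2: { rewrite <- Rpower_pow by lra. rewrite Rpower_mult. replace (INR 2 * eps) with (2 * eps) by (simpl; ring). reflexivity. }
  rewrite Rpower_mult_distr; [|apply pow_lt; lra|exact Hq].
  apply Rle_Rpower_l; [lra|]. split; [pose proof (pow2_ge_0 (IZR k)); lra|].
  replace (lam ^ 2 * (1 + (IZR k / lam) ^ 2)) with (lam ^ 2 + IZR k ^ 2) by (field; lra).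
  assert (1 <= lam ^ 2) by nra. lra.
Qed.

End M_FIN1.
Import M_FIN1.

Module M_FIN2.
Import ListNotations.
Local Open Scope R_scope.

Lemma Aj_le c N jj : Aj c N jj <= Cmod (beta c N (fst jj)) * Cmod (beta c N (snd jj)).
Proof.
  unfold Aj, Cmod. destruct (beta c N (fst jj)) as [p q]. destruct (beta c N (snd jj)) as [p' q'].
  cbn [fst snd]. rewrite <- sqrt_mult by (pose proof (pow2_ge_0 p); pose proof (pow2_ge_0 q);
    pose proof (pow2_ge_0 p'); pose proof (pow2_ge_0 q'); lra).
  destruct (Rle_or_lt (p * p' + q * q') 0) as [H|H].
  - pose proof (sqrt_pos ((p ^ 2 + q ^ 2) * (p' ^ 2 + q' ^ 2))); lra.
  - rewrite <- (sqrt_pow2 (p * p' + q * q')) by lra. apply sqrt_le_1_alt.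
    replace ((p ^ 2 + q ^ 2) * (p' ^ 2 + q' ^ 2)) with ((p * p' + q * q') ^ 2 + (p * q' - q * p') ^ 2) by ring.
    pose proof (pow2_ge_0 (p * q' - q * p')). lra.
Qed.

Lemma sum_Wb d c N : lsum (Tr N) (fun j => wj d N j * Cmod (beta c N j) ^ 2) =
  (lsum (Idx N) (fun n => Wk d (kk N n) * Cmod (c (kk N n)) ^ 2)) ^ 3.
Proof.
  set (g := fun n => Wk d (kk N n) * Cmod (c (kk N n)) ^ 2).
  replace ((lsum (Idx N) g) ^ 3) with (lsum (Idx N) g * lsum (Idx N) g * lsum (Idx N) g) by ring.
  rewrite lsum_mult, lsum_mult. unfold Tr. apply lsum_ext. intros [[n1 n2] n3] _.
  unfold wj, beta, g, k1, k2, k3. cbn [fst snd]. rewrite !Cmod_mult. ring.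
Qed.

Lemma X_nonneg d c N : 0 <= lsum (Idx N) (fun n => Wk d (kk N n) * Cmod (c (kk N n)) ^ 2).
Proof.
  apply lsum_nonneg. intros n _. apply Rmult_le_pos; [left; apply Rpower_pos|apply pow2_ge_0].
Qed.

Lemma X_bound eps lam c N : 0 < eps -> 1 <= lam -> in_Hs eps lam c ->
  lsum (Idx N) (fun n => Wk eps (kk N n) * Cmod (c (kk N n)) ^ 2) <=
  Rpower lam (2 * eps) * (Series (hs_pos eps lam c) + Series (hs_neg eps lam c)).
Proof.
  intros He Hl Hs. eapply Rle_trans; [|apply Rmult_le_compat_l; [left; apply Rpower_pos|apply (hs_sum_bound eps lam c N Hs)]].
  rewrite <- lsum_scal. apply lsum_le. intros n _. unfold hs_term.
  pose proof (Wk_bound eps lam (kk N n) He Hl). pose proof (pow2_ge_0 (Cmod (c (kk N n)))).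
  rewrite <- Rmult_assoc. apply Rmult_le_compat_r; auto.
Qed.

Lemma I_bound eps lam c N Cc : 0 < eps -> 1 <= lam -> 0 <= Cc ->
  (forall j, lsum (Tr N) (fun j' => if same N j j' then / wj eps N j' else 0) <= Cc) ->
  RInt (fun t => RInt (fun x => Cmod (lin_sol_trunc lam c N t x) ^ 6) 0 (2 * PI * lam)) 0 (2 * PI * lam ^ 2)
  <= 2 * PI * lam * (2 * PI * lam ^ 2) * (/ (2 * PI * lam)) ^ 6 * Cc *
     (lsum (Idx N) (fun n => Wk eps (kk N n) * Cmod (c (kk N n)) ^ 2)) ^ 3.
Proof.
  intros He Hl HC Hcnt. rewrite integral_value by lra.
  set (K0 := 2 * PI * lam * (2 * PI * lam ^ 2) * (/ (2 * PI * lam)) ^ 6).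
  assert (HK0 : 0 <= K0).
  { unfold K0. pose proof PI_RGT_0. assert (0 < 2 * PI * lam) by nra.
    apply Rmult_le_pos; [apply Rmult_le_pos; [lra|]|].
    - apply Rmult_le_pos; [lra|]. apply pow_le; lra.
    - apply pow_le. left; apply Rinv_0_lt_compat; auto. }
  eapply Rle_trans.
  { apply (lsum_le _ _ (fun jj => K0 * (if same N (fst jj) (snd jj) then
        Cmod (beta c N (fst jj)) * Cmod (beta c N (snd jj)) else 0))).
    intros jj _. unfold same. destruct (andb _ _); [|lra].
    replace (2 * PI * lam * (2 * PI * lam ^ 2) * ((/ (2 * PI * lam)) ^ 6 * Aj c N jj)) with (K0 * Aj c N jj)
      by (unfold K0; ring).
    apply Rmult_le_compat_l; auto. apply Aj_le. }
  rewrite lsum_scal. rewrite <- sum_Wb.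
  replace (K0 * Cc * lsum (Tr N) (fun j => wj eps N j * Cmod (beta c N j) ^ 2)) with
    (K0 * (Cc * lsum (Tr N) (fun j => wj eps N j * Cmod (beta c N j) ^ 2))) by ring.
  apply Rmult_le_compat_l; auto.
  apply (cs_bound (Tr N) (same N) (wj eps N) (fun j => Cmod (beta c N j)) Cc).
  - intros j. unfold wj, Wk. repeat apply Rmult_lt_0_compat; apply Rpower_pos.
  - apply same_sym.
  - intros j _. apply Hcnt.
Qed.

End M_FIN2.
Import M_FIN2.

Open Scope R_scope.
Theorem proposition3p5 :
  forall eps : R, 0 < eps ->
  exists C0 : R, 0 < C0 /\
    forall lam : R, 1 <= lam ->
    forall c : Z -> C, in_Hs eps lam c ->
    forall N : nat,
      L6_norm lam (lin_sol_trunc lam c N) <= C0 * Rpower lam eps * Hs_norm eps lam c.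
Proof.
  intros eps He.
  destruct (count_bound eps He) as [Cc [HCc Hcnt]].
  pose proof PI_RGT_0 as Hpi.
  set (A0 := Cc / (2 * PI) + 1).
  assert (HA0 : 0 < A0) by (unfold A0; assert (0 <= Cc / (2 * PI)) by (apply Rle_mult_inv_pos; lra); lra).
  exists (Rpower A0 (/ 6)). split; [apply Rpower_pos|].
  intros lam Hl c Hs N.
  pose proof (I_bound eps lam c N Cc He Hl HCc (Hcnt N)) as HI.
  set (I := RInt _ 0 (2 * PI * lam ^ 2)) in *.
  set (X := lsum (Idx N) (fun n => Wk eps (kk N n) * Cmod (c (kk N n)) ^ 2)) in *.
  assert (HX0 : 0 <= X) by apply X_nonneg.
  pose proof (X_bound eps lam c N He Hl Hs) as HX. fold X in HX.
  set (S := Series (hs_pos eps lam c) + Series (hs_neg eps lam c)) in *.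
  assert (HS : 0 <= S).
  { destruct Hs as [Hp Hn]. unfold S.
    pose proof (partial_le_Series (hs_pos eps lam c) 0 (fun k => hs_nonneg _ _ _ _) Hp).
    pose proof (partial_le_Series (hs_neg eps lam c) 0 (fun k => hs_nonneg _ _ _ _) Hn).
    simpl in *. lra. }
  set (kap := / (2 * PI * lam)).
  assert (Hkap : 0 < kap) by (unfold kap; apply Rinv_0_lt_compat; nra).
  assert (HH : Hs_norm eps lam c ^ 2 = kap * S).
  { unfold Hs_norm. fold S. fold kap. rewrite pow2_sqrt; auto. apply Rmult_le_pos; lra. }
  assert (HHn : 0 <= Hs_norm eps lam c) by (unfold Hs_norm; apply sqrt_pos).
  set (y := Rpower lam eps * Hs_norm eps lam c).
  assert (Hy0 : 0 <= y) by (unfold y; apply Rmult_le_pos; [left; apply Rpower_pos|auto]).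
  assert (Hp2 : Rpower lam (2 * eps) ^ 3 = Rpower lam eps ^ 6).
  { rewrite <- !Rpower_pow by apply Rpower_pos. rewrite !Rpower_mult. f_equal. simpl. ring. }
  assert (Hy6 : y ^ 6 = Rpower lam eps ^ 6 * (kap * S) ^ 3).
  { unfold y. rewrite <- HH. ring. }
  assert (HIB : I <= A0 * y ^ 6).
  { eapply Rle_trans; [exact HI|].
    assert (HX3 : X ^ 3 <= (Rpower lam (2 * eps) * S) ^ 3) by (apply pow_incr; lra).
    assert (HK : 0 <= 2 * PI * lam * (2 * PI * lam ^ 2) * (/ (2 * PI * lam)) ^ 6 * Cc).
    { assert (0 < 2 * PI * lam) by nra. assert (0 < lam ^ 2) by (apply pow_lt; lra).
      assert (0 < 2 * PI * lam ^ 2) by nra. fold kap.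
      assert (0 <= kap ^ 6) by (apply pow_le; lra).
      apply Rmult_le_pos; auto. apply Rmult_le_pos; auto. apply Rmult_le_pos; lra. }
    eapply Rle_trans; [apply Rmult_le_compat_l; [exact HK|exact HX3]|].
    rewrite Rpow_mult_distr, Hp2, Hy6. fold kap.
    replace (2 * PI * lam * (2 * PI * lam ^ 2) * kap ^ 6 * Cc * (Rpower lam eps ^ 6 * S ^ 3))
      with (Cc / (2 * PI) * (Rpower lam eps ^ 6 * (kap * S) ^ 3)).
    2: { unfold kap. field. split; lra. }
    unfold A0. pose proof (pow_le (Rpower lam eps) 6 (Rlt_le _ _ (Rpower_pos lam eps))).
    assert (0 <= (kap * S) ^ 3) by (apply pow_le; apply Rmult_le_pos; lra).
    assert (0 <= Rpower lam eps ^ 6 * (kap * S) ^ 3) by (apply Rmult_le_pos; auto).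
    lra. }
  unfold L6_norm, root6. fold I.
  rewrite Rmult_assoc. fold y.
  destruct (Rle_dec I 0) as [HI0|HI0].
  - apply Rmult_le_pos; [left; apply Rpower_pos|auto].
  - assert (HIp : 0 < I) by lra.
    assert (Hyp : 0 < y).
    { destruct Hy0 as [|Hy0]; auto. rewrite <- Hy0 in HIB. simpl in HIB. lra. }
    eapply Rle_trans; [apply Rle_Rpower_l; [left; apply Rinv_0_lt_compat; lra|split; [exact HIp|exact HIB]]|].
    rewrite <- Rpower_mult_distr by (auto; apply pow_lt; auto).
    rewrite <- Rpower_pow by auto. rewrite Rpower_mult.
    replace (INR 6 * / 6) with 1 by (simpl; field). rewrite Rpower_1 by auto. lra.
Qed.
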